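(* $\mathcal{S}^*[1-\alpha,0]\subset\mathcal{S}^*_{car}$ for all $\alpha\in[1/2,1)$, and $\mathcal{S}^*[\alpha,-\alpha]\subset\mathcal{S}^*_{car}$ for all $\alpha\in(0,1/3]$. In particular, if $f\in\mathcal{A}$ satisfies \[\left|\frac{zf'(z)}{f(z)}-1\right|<\frac12\quad\text{or}\quad\left|\frac{zf'(z)/f(z)-1}{zf'(z)/f(z)+1}\right|<\frac13\] for all $z\in\mathbb{D}$, then $f\in\mathcal{S}^*_{car}$.
   Context: $\mathbb{D}=\{z:|z|<1\}$; $\mathcal{A}$ is the class of analytic $f$ on $\mathbb{D}$ with $f(0)=0$, $f'(0)=1$. $F\prec G$ means $F=G\circ w$ for an analytic $w:\mathbb{D}\to\mathbb{D}$ with $w(0)=0$. $\mathcal{S}^*_{car}$ is the class of $f\in\mathcal{A}$ with $zf'(z)/f(z)\prec 1+z+z^2/2$; for $-1\le B<A\le1$, $\mathcal{S}^*[A,B]$ is the class of $f\in\mathcal{A}$ with $zf'(z)/f(z)\prec(1+Az)/(1+Bz)$. *)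

(* Defs.v *)
From Stdlib Require Import Reals.
From Coquelicot Require Import Coquelicot.
Open Scope R_scope.

Definition inD (z : C) : Prop := Cmod z < 1.

Definition analytic_D (f : C -> C) : Prop :=
  forall z : C, inD z -> ex_derive f z.

Definition classA (f : C -> C) : Prop :=
  analytic_D f /\ f 0%C = 0%C /\ is_derive (K := C_AbsRing) (V := C_NormedModule) f (RtoC 0) (RtoC 1).

Definition subord (F G : C -> C) : Prop :=
  exists w : C -> C, analytic_D w /\ (forall z, inD z -> inD (w z)) /\
    w 0%C = 0%C /\ (forall z, inD z -> F z = G (w z)).

(* z f'(z) / f(z), with its removable-singularity value 1 at z = 0 *)
Definition zfpf (f : C -> C) (z : C) : C :=
  if Ceq_dec z 0%C then 1%C else (z * C_derive f z / f z)%C.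

Definition phi_car (z : C) : C := (1 + z + z * z / 2)%C.

Definition janowski (A B : R) (z : C) : C :=
  ((1 + RtoC A * z) / (1 + RtoC B * z))%C.

Definition S_star_car (f : C -> C) : Prop :=
  classA f /\ subord (zfpf f) phi_car.

Definition S_star_AB (A B : R) (f : C -> C) : Prop :=
  classA f /\ subord (zfpf f) (janowski A B).

(* Main.v *)
Require Import Defs.
From Stdlib Require Import Reals Lra Psatz Classical ClassicalEpsilon.
From Coquelicot Require Import Coquelicot.
Open Scope R_scope.

Notation CD f z l := (is_derive (K:=C_AbsRing) (V:=C_NormedModule) f z l).

Lemma Cmod_sqr (z : C) : Cmod z * Cmod z = fst z * fst z + snd z * snd z.
Proof. unfold Cmod. rewrite sqrt_sqrt. simpl; ring. destruct z; simpl; nra. Qed.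

Lemma Cmod_fst (z : C) : Rabs (fst z) <= Cmod z.
Proof. apply re_le_Cmod. Qed.
Lemma Cmod_snd (z : C) : Rabs (snd z) <= Cmod z.
Proof. pose proof (Rmax_Cmod z). pose proof (Rmax_r (Rabs (fst z)) (Rabs (snd z))). lra. Qed.
Lemma Cmod_le_sum (z : C) : Cmod z <= Rabs (fst z) + Rabs (snd z).
Proof.
  assert (0 <= Cmod z) by apply Cmod_ge_0.
  pose proof (Cmod_sqr z). pose proof (Rabs_pos (fst z)). pose proof (Rabs_pos (snd z)).
  assert (Rabs (fst z) * Rabs (fst z) = fst z * fst z) by (rewrite <- Rabs_mult; apply Rabs_right; nra).
  assert (Rabs (snd z) * Rabs (snd z) = snd z * snd z) by (rewrite <- Rabs_mult; apply Rabs_right; nra).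
  nra.
Qed.

Lemma CD_eps (f : C -> C) z l :
  CD f z l <->
  forall eps, 0 < eps -> exists d, 0 < d /\ forall h, Cmod h < d ->
     Cmod (f (z+h) - f z - h*l)%C <= eps * Cmod h.
Proof.
  split.
  - intros [_ Hd] eps Heps.
    specialize (Hd z (fun P H => H)).
    destruct (locally_norm_le_locally z _ (Hd (mkposreal eps Heps))) as [d Hd'].
    exists d; split; [apply cond_pos|]. intros h Hh.
    assert (H1 := Hd' (z+h)%C). unfold ball_norm in H1.
    simpl in H1. change (minus (z+h)%C z) with ((z+h) - z)%C in H1.
    replace ((z+h) - z)%C with h in H1 by ring.
    apply H1; exact Hh.
  - intros H. split. apply is_linear_scal_l.
    intros x Hx. apply (is_filter_lim_locally_unique (K:=C_AbsRing) (V:=AbsRing_NormedModule C_AbsRing)) in Hx. subst x.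
    intros eps. apply (locally_le_locally_norm (K:=C_AbsRing) (V:=AbsRing_NormedModule C_AbsRing)).
    destruct (H eps (cond_pos eps)) as [d [Hd Hd']].
    exists (mkposreal d Hd). intros y Hy. unfold ball_norm in Hy. simpl in Hy.
    change (minus y z) with (y - z)%C in *.
    specialize (Hd' (y - z)%C Hy).
    replace (z + (y - z))%C with (y:C) in Hd' by (change C in y; ring).
    exact Hd'.
Qed.

Lemma CD_eps_A (f : C -> C) z l :
  is_derive (K:=C_AbsRing) (V:=AbsRing_NormedModule C_AbsRing) f z l <->
  forall eps, 0 < eps -> exists d, 0 < d /\ forall h, Cmod h < d ->
     Cmod (f (z+h) - f z - h*l)%C <= eps * Cmod h.
Proof.
  split.
  - intros [_ Hd] eps Heps.
    specialize (Hd z (fun P H => H)).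
    destruct (locally_norm_le_locally z _ (Hd (mkposreal eps Heps))) as [d Hd'].
    exists d; split; [apply cond_pos|]. intros h Hh.
    assert (H1 := Hd' (z+h)%C). unfold ball_norm in H1.
    simpl in H1. change (minus (z+h)%C z) with ((z+h) - z)%C in H1.
    replace ((z+h) - z)%C with h in H1 by ring.
    apply H1; exact Hh.
  - intros H. split. apply is_linear_scal_l.
    intros x Hx. apply (is_filter_lim_locally_unique (K:=C_AbsRing) (V:=AbsRing_NormedModule C_AbsRing)) in Hx. subst x.
    intros eps. apply (locally_le_locally_norm (K:=C_AbsRing) (V:=AbsRing_NormedModule C_AbsRing)).
    destruct (H eps (cond_pos eps)) as [d [Hd Hd']].
    exists (mkposreal d Hd). intros y Hy. unfold ball_norm in Hy. simpl in Hy.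
    change (minus y z) with (y - z)%C in *.
    specialize (Hd' (y - z)%C Hy).
    replace (z + (y - z))%C with (y:C) in Hd' by (change C in y; ring).
    exact Hd'.
Qed.

Lemma CD_A f z l : CD f z l <-> is_derive (K:=C_AbsRing) (V:=AbsRing_NormedModule C_AbsRing) f z l.
Proof. rewrite CD_eps, CD_eps_A. tauto. Qed.

Lemma CD_ext_loc (f g : C -> C) (z l : C) r : 0 < r -> (forall w, Cmod (w - z) < r -> f w = g w) -> CD f z l -> CD g z l.
Proof.
  intros Hr Hfg H. rewrite CD_eps in *. intros eps He.
  destruct (H eps He) as [d [Hd H']]. exists (Rmin d r). split. apply Rmin_pos; lra.
  intros h Hh. rewrite <- !Hfg. apply H'. pose proof (Rmin_l d r). lra.
  replace (z - z)%C with (RtoC 0) by ring. rewrite Cmod_0. lra.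
  replace (z + h - z)%C with h by ring. pose proof (Rmin_r d r). lra.
Qed.

Lemma CD_const (c : C) z : CD (fun _ => c) z (RtoC 0).
Proof. apply (is_derive_const (K:=C_AbsRing) (V:=C_NormedModule)). Qed.
Lemma CD_id z : CD (fun w => w) z (RtoC 1).
Proof. apply CD_A. apply (is_derive_id (K:=C_AbsRing)). Qed.
Lemma CD_plus (f g : C -> C) (z a b : C) : CD f z a -> CD g z b -> CD (fun w => f w + g w)%C z (a + b)%C.
Proof. intros. apply (is_derive_plus (K:=C_AbsRing) (V:=C_NormedModule)); auto. Qed.
Lemma CD_minus (f g : C -> C) (z a b : C) : CD f z a -> CD g z b -> CD (fun w => f w - g w)%C z (a - b)%C.
Proof. intros. apply (is_derive_minus (K:=C_AbsRing) (V:=C_NormedModule)); auto. Qed.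
Lemma CD_mult (f g : C -> C) (z a b : C) : CD f z a -> CD g z b -> CD (fun w => f w * g w)%C z (a * g z + f z * b)%C.
Proof. intros. apply CD_A. apply CD_A in H. apply CD_A in H0.
  apply (is_derive_mult (K:=C_AbsRing)); auto. intros; apply Cmult_comm. Qed.
Lemma CD_comp (f g : C -> C) (z a b : C) : CD f (g z) a -> CD g z b -> CD (fun w => f (g w)) z (b * a)%C.
Proof. intros. apply CD_A in H0. apply (is_derive_comp (K:=C_AbsRing) (V:=C_NormedModule)); auto. Qed.
Lemma CD_scal (c : C) (f : C -> C) (z a : C) : CD f z a -> CD (fun w => c * f w)%C z (c * a)%C.
Proof. intros H. replace (c*a)%C with (0 * f z + c * a)%C by ring. apply CD_mult; auto. apply CD_const. Qed.
Lemma CD_eq (f : C -> C) (z a b : C) : CD f z a -> a = b -> CD f z b.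
Proof. intros H ->; auto. Qed.
Lemma Cmod_rev (a b : C) : Cmod a - Cmod b <= Cmod (a - b).
Proof. pose proof (Cmod_triangle (a - b) b). replace (a - b + b)%C with a in H by ring. lra. Qed.
Lemma Cmod_rev2 (a b : C) : Cmod a - Cmod b <= Cmod (a + b).
Proof. pose proof (Cmod_rev a (-b)). rewrite Cmod_opp in H. replace (a - - b)%C with (a+b)%C in H by ring. exact H. Qed.
Lemma Cmod_sub_sym (a b : C) : Cmod (a - b) = Cmod (b - a).
Proof. replace (a - b)%C with (- (b - a))%C by ring. apply Cmod_opp. Qed.
Lemma Cmod_pos_neq (z : C) : 0 < Cmod z -> z <> 0%C.
Proof. intros H E. rewrite E, Cmod_0 in H. lra. Qed.
Lemma Cneq_Cmod (z : C) : z <> RtoC 0 -> 0 < Cmod z.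
Proof. intros H. apply Cmod_gt_0. exact H. Qed.

Lemma CD_Cinv w : w <> RtoC 0 -> CD Cinv w (- / (w * w))%C.
Proof.
  intros Hw. apply CD_eps. intros eps He.
  pose proof (Cneq_Cmod w Hw) as Hm.
  exists (Rmin (Cmod w / 2) (eps * (Cmod w * Cmod w * Cmod w) / 2)).
  split. apply Rmin_pos. lra. apply Rmult_lt_0_compat; [|lra]. repeat apply Rmult_lt_0_compat; lra.
  intros h Hh. pose proof (Rmin_l (Cmod w / 2) (eps * (Cmod w * Cmod w * Cmod w) / 2)).
  pose proof (Rmin_r (Cmod w / 2) (eps * (Cmod w * Cmod w * Cmod w) / 2)).
  pose proof (Cmod_rev2 w h). pose proof (Cmod_ge_0 h).
  assert (Hwh : (w + h)%C <> RtoC 0). apply Cmod_pos_neq. lra.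
  replace (/ (w + h) - / w - h * - / (w * w))%C with (h * h / (w * w * (w + h)))%C by (field; tauto).
  rewrite Cmod_div, !Cmod_mult. 2:{ apply Cmult_neq_0; [apply Cmult_neq_0|]; auto. }
  assert (0 < Cmod (w + h)) by lra.
  apply (Rmult_le_reg_r (Cmod w * Cmod w * Cmod (w + h))). repeat apply Rmult_lt_0_compat; lra.
  unfold Rdiv. rewrite Rmult_assoc, Rinv_l. 2:{ apply Rgt_not_eq. repeat apply Rmult_lt_0_compat; lra. }
  rewrite Rmult_1_r.
  assert (Cmod h <= eps * (Cmod w * Cmod w * Cmod (w + h))).
  { assert (Cmod h <= eps * (Cmod w * Cmod w * Cmod w) / 2) by lra.
    assert (Cmod w <= 2 * Cmod (w+h)) by lra.
    assert (0 <= Cmod w * Cmod w) by nra.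
    assert (eps * (Cmod w * Cmod w * Cmod w) <= eps * (Cmod w * Cmod w * (2 * Cmod (w+h)))).
    { apply Rmult_le_compat_l. lra. apply Rmult_le_compat_l; lra. }
    lra. }
  replace (eps * Cmod h * (Cmod w * Cmod w * Cmod (w + h))) with (Cmod h * (eps * (Cmod w * Cmod w * Cmod (w + h)))) by ring.
  apply Rmult_le_compat_l; lra.
Qed.

Lemma CD_inv (f : C -> C) (z l : C) : CD f z l -> f z <> RtoC 0 -> CD (fun w => / f w)%C z (- l / (f z * f z))%C.
Proof.
  intros H Hz. pose proof (CD_comp Cinv f z _ _ (CD_Cinv _ Hz) H) as H1.
  eapply CD_eq. exact H1. cbv beta. field. auto.
Qed.

Lemma CD_div (f g : C -> C) (z a b : C) : CD f z a -> CD g z b -> g z <> RtoC 0 ->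
  CD (fun w => f w / g w)%C z ((a * g z - f z * b) / (g z * g z))%C.
Proof.
  intros Hf Hg Hz. pose proof (CD_mult _ _ _ _ _ Hf (CD_inv _ _ _ Hg Hz)) as H1.
  eapply CD_eq. exact H1. cbv beta. field. auto.
Qed.

Definition ccont (f : C -> C) (z : C) := forall e, 0 < e -> exists d, 0 < d /\
  forall w, Cmod (w - z) < d -> Cmod (f w - f z) < e.

Lemma CD_cont (f : C -> C) (z l : C) : CD f z l -> ccont f z.
Proof.
  rewrite CD_eps. intros H e He. destruct (H 1 Rlt_0_1) as [d [Hd H']].
  assert (Hl : 0 <= Cmod l) by apply Cmod_ge_0.
  exists (Rmin d (e / (Cmod l + 2))). split. apply Rmin_pos. lra. apply Rdiv_lt_0_compat; lra.
  intros w Hw. pose proof (Rmin_l d (e / (Cmod l + 2))) as M1. pose proof (Rmin_r d (e / (Cmod l + 2))) as M2.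
  specialize (H' (w - z)%C ltac:(lra)). replace (z + (w - z))%C with w in H' by ring.
  pose proof (Cmod_triangle (f w - f z - (w - z) * l) ((w - z) * l)) as T.
  replace (f w - f z - (w - z) * l + (w - z) * l)%C with (f w - f z)%C in T by ring.
  rewrite Cmod_mult in T. pose proof (Cmod_ge_0 (w - z)) as P.
  assert (Cmod (w - z) * (Cmod l + 2) < e).
  { apply (Rmult_lt_reg_r (/ (Cmod l + 2))). apply Rinv_0_lt_compat; lra.
    rewrite Rmult_assoc, Rinv_r by lra. rewrite Rmult_1_r. unfold Rdiv in M2. lra. }
  nra.
Qed.

Lemma ex_CD_cont f z : ex_derive (K:=C_AbsRing) (V:=C_NormedModule) f z -> ccont f z.
Proof. intros [l H]. eapply CD_cont; eauto. Qed.

Lemma CD_Cderive (f : C -> C) (z l : C) : CD f z l -> C_derive f z = l.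
Proof. apply is_C_derive_unique. Qed.

Definition RI (g : R -> C) (a b : R) : C := RInt (V:=C_R_CompleteNormedModule) g a b.
Definition exRI (g : R -> C) (a b : R) := ex_RInt (V:=C_R_CompleteNormedModule) g a b.
Definition rcont (g : R -> C) t := forall e, 0 < e -> exists d, 0 < d /\
  forall s, Rabs (s - t) < d -> Cmod (g s - g t) < e.

Lemma scal_CR (r : R) (v : C) : @scal _ C_R_NormedModule r v = (RtoC r * v)%C.
Proof. destruct v as [x y]. unfold scal; simpl. unfold prod_scal. simpl. unfold Cmult, RtoC; simpl.
  f_equal; unfold scal; simpl; unfold mult; simpl; ring. Qed.

Lemma normCR (z : C) : @norm R_AbsRing C_R_NormedModule z = Cmod z.
Proof. rewrite <- Cmod_norm. reflexivity. Qed.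

Lemma rcont_continuous (g : R -> C) t : rcont g t -> @continuous R_UniformSpace C_R_CompleteNormedModule g t.
Proof.
  intros H. unfold continuous. apply filterlim_locally. intros eps.
  destruct (H eps (cond_pos eps)) as [d [Hd H']]. exists (mkposreal d Hd). intros s Hs.
  specialize (H' s Hs). split; simpl.
  - unfold ball; simpl; unfold AbsRing_ball, abs, minus, plus, opp; simpl.
    pose proof (Cmod_fst (g s - g t)%C). simpl in H0. lra.
  - unfold ball; simpl; unfold AbsRing_ball, abs, minus, plus, opp; simpl.
    pose proof (Cmod_snd (g s - g t)%C). simpl in H0. lra.
Qed.

Lemma exRI_cont g a b : a <= b -> (forall t, a <= t <= b -> rcont g t) -> exRI g a b.
Proof.
  intros Hab H. apply ex_RInt_continuous. intros t Ht.
  rewrite Rmin_left, Rmax_right in Ht by lra. apply rcont_continuous. auto.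
Qed.

Lemma RI_plus g1 g2 a b : exRI g1 a b -> exRI g2 a b -> RI (fun t => g1 t + g2 t)%C a b = (RI g1 a b + RI g2 a b)%C.
Proof. intros. unfold RI. apply (RInt_plus (V:=C_R_CompleteNormedModule)); auto. Qed.
Lemma exRI_plus g1 g2 a b : exRI g1 a b -> exRI g2 a b -> exRI (fun t => g1 t + g2 t)%C a b.
Proof. intros. apply (ex_RInt_plus (V:=C_R_CompleteNormedModule)); auto. Qed.
Lemma RI_minus g1 g2 a b : exRI g1 a b -> exRI g2 a b -> RI (fun t => g1 t - g2 t)%C a b = (RI g1 a b - RI g2 a b)%C.
Proof. intros. unfold RI. apply (RInt_minus (V:=C_R_CompleteNormedModule)); auto. Qed.
Lemma exRI_minus g1 g2 a b : exRI g1 a b -> exRI g2 a b -> exRI (fun t => g1 t - g2 t)%C a b.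
Proof. intros. apply (ex_RInt_minus (V:=C_R_CompleteNormedModule)); auto. Qed.

Lemma is_RI_Ci g a b l : is_RInt (V:=C_R_CompleteNormedModule) g a b l ->
  is_RInt (V:=C_R_CompleteNormedModule) (fun t => Ci * g t)%C a b (Ci * l)%C.
Proof.
  intros H.
  assert (H1 := is_RInt_fct_extend_fst (U:=R_NormedModule) (V:=R_NormedModule) g a b l H).
  assert (H2 := is_RInt_fct_extend_snd (U:=R_NormedModule) (V:=R_NormedModule) g a b l H).
  assert (E : (Ci * l)%C = (opp (snd l), fst l)).
  { destruct l; unfold Ci, Cmult; simpl. unfold opp; simpl. f_equal; ring. }
  rewrite E.
  eapply is_RInt_ext.
  2:{ apply (is_RInt_fct_extend_pair (U:=R_NormedModule) (V:=R_NormedModule) (fun t => (opp (snd (g t)), fst (g t)))).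
      apply (is_RInt_opp (V:=R_NormedModule)). exact H2. exact H1. }
  intros t _. unfold Ci, Cmult; simpl. unfold opp; simpl. f_equal; ring.
Qed.

Lemma is_RI_scal (c : C) g a b l : is_RInt (V:=C_R_CompleteNormedModule) g a b l ->
  is_RInt (V:=C_R_CompleteNormedModule) (fun t => c * g t)%C a b (c * l)%C.
Proof.
  intros H.
  assert (E : forall v : C, (c * v)%C = plus (scal (fst c) v) (scal (snd c) (Ci * v)%C)).
  { intros v. change (plus (scal (fst c) v) (scal (snd c) (Ci * v)%C)) with
      (@plus C_R_NormedModule (@scal _ C_R_NormedModule (fst c) v) (@scal _ C_R_NormedModule (snd c) (Ci * v)%C)).
    rewrite !scal_CR. change (@plus C_R_NormedModule) with Cplus. destruct c as [c1 c2]. destruct v.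
    unfold Ci, Cmult, Cplus, RtoC; simpl. f_equal; ring. }
  rewrite E. eapply is_RInt_ext. intros t _. symmetry. apply E.
  apply (is_RInt_plus (V:=C_R_CompleteNormedModule)). apply (is_RInt_scal (V:=C_R_CompleteNormedModule)). exact H. apply (is_RInt_scal (V:=C_R_CompleteNormedModule)). apply is_RI_Ci. exact H.
Qed.

Lemma exRI_scal (c : C) g a b : exRI g a b -> exRI (fun t => c * g t)%C a b.
Proof. intros [l H]. exists (c * l)%C. apply is_RI_scal. exact H. Qed.
Lemma RI_scal (c : C) g a b : exRI g a b -> RI (fun t => c * g t)%C a b = (c * RI g a b)%C.
Proof. intros H. unfold RI. apply (is_RInt_unique (V:=C_R_CompleteNormedModule)). apply is_RI_scal. apply (RInt_correct (V:=C_R_CompleteNormedModule)). exact H. Qed.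

Lemma RI_Chasles g a b c : exRI g a b -> exRI g b c -> (RI g a b + RI g b c)%C = RI g a c.
Proof. intros. unfold RI. apply (RInt_Chasles (V:=C_R_CompleteNormedModule)); auto. Qed.

Lemma RI_ext g1 g2 a b : a <= b -> (forall t, a <= t <= b -> g1 t = g2 t) -> RI g1 a b = RI g2 a b.
Proof. intros Hab H. unfold RI. apply (RInt_ext (V:=C_R_CompleteNormedModule)). intros t Ht. rewrite Rmin_left, Rmax_right in Ht by lra. apply H; lra. Qed.

Lemma exRI_ext g1 g2 a b : a <= b -> (forall t, a <= t <= b -> g1 t = g2 t) -> exRI g1 a b -> exRI g2 a b.
Proof. intros Hab H E. eapply (ex_RInt_ext (V:=C_R_CompleteNormedModule)). 2: exact E. intros t Ht. rewrite Rmin_left, Rmax_right in Ht by lra. apply H; lra. Qed.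

Lemma RI_bound g a b M : a <= b -> exRI g a b -> (forall t, a <= t <= b -> Cmod (g t) <= M) ->
  Cmod (RI g a b) <= (b - a) * M.
Proof.
  intros Hab Hex H. rewrite Cmod_norm.
  apply (norm_RInt_le (V:=C_R_NormedModule) g (fun _ => M) a b (RI g a b) ((b - a) * M) Hab).
  intros t Ht. change (norm (g t)) with (@norm R_AbsRing C_R_NormedModule (g t)). rewrite normCR. auto.
  apply (RInt_correct (V:=C_R_CompleteNormedModule)). exact Hex.
  apply (is_RInt_const (V:=R_NormedModule)).
Qed.

Lemma RI_snd g a b : exRI g a b -> snd (RI g a b) = RInt (fun t => snd (g t)) a b.
Proof.
  intros H. symmetry. apply (is_RInt_unique (V:=R_CompleteNormedModule)).
  apply (is_RInt_fct_extend_snd (U:=R_NormedModule) (V:=R_NormedModule)).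
  apply (RInt_correct (V:=C_R_CompleteNormedModule)). exact H.
Qed.

Lemma RD_eps (g : R -> C) t l :
  (forall eps, 0 < eps -> exists d, 0 < d /\ forall h, Rabs h < d ->
     Cmod (g (t+h)%R - g t - RtoC h * l)%C <= eps * Rabs h) ->
  is_derive (K:=R_AbsRing) (V:=C_R_NormedModule) g t l.
Proof.
  intros H. split. apply is_linear_scal_l.
  intros x Hx. apply (is_filter_lim_locally_unique (K:=R_AbsRing) (V:=AbsRing_NormedModule R_AbsRing)) in Hx. subst x.
  intros eps. apply (locally_le_locally_norm (K:=R_AbsRing) (V:=AbsRing_NormedModule R_AbsRing)).
  destruct (H eps (cond_pos eps)) as [d [Hd Hd']].
  exists (mkposreal d Hd). intros y Hy. unfold ball_norm in Hy. simpl in Hy.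
  change (@norm R_AbsRing C_R_NormedModule (minus (minus (g y) (g t)) (scal (minus y t) l)) <= eps * abs (minus y t)).
  rewrite normCR, scal_CR. change (minus y t) with (y - t) in *.
  change (@minus C_R_NormedModule (@minus C_R_NormedModule (g y) (g t)) (RtoC (y - t) * l)%C)
    with (g y - g t - RtoC (y - t) * l)%C.
  change (abs (y - t)) with (Rabs (y - t)). change (abs (y - t)) with (Rabs (y - t)) in Hy.
  specialize (Hd' (y - t) Hy). replace (t + (y - t)) with (y:R) in Hd' by (change R in y; ring). exact Hd'.
Qed.

Lemma hline (F : C -> C) x y l : CD F (x,y) l ->
  is_derive (K:=R_AbsRing) (V:=C_R_NormedModule) (fun t => F (t,y)) x l.
Proof.
  rewrite CD_eps. intros H. apply RD_eps. intros eps He. destruct (H eps He) as [d [Hd H']].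
  exists d. split; auto. intros h Hh. specialize (H' (RtoC h)). rewrite Cmod_R in H'.
  replace ((x, y) + RtoC h)%C with ((x + h, y) : C) in H'. apply H'; auto.
  unfold Cplus, RtoC; simpl. f_equal; ring.
Qed.

Lemma vline (F : C -> C) x y l : CD F (x,y) l ->
  is_derive (K:=R_AbsRing) (V:=C_R_NormedModule) (fun t => F (x,t)) y (Ci * l)%C.
Proof.
  rewrite CD_eps. intros H. apply RD_eps. intros eps He. destruct (H eps He) as [d [Hd H']].
  exists d. split; auto. intros h Hh. specialize (H' (RtoC h * Ci)%C).
  rewrite Cmod_mult, Cmod_R, Cmod_Ci, Rmult_1_r in H'.
  replace ((x, y) + RtoC h * Ci)%C with ((x, y + h) : C) in H'.
  replace (RtoC h * (Ci * l))%C with (RtoC h * Ci * l)%C by ring. apply H'; auto.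
  unfold Cplus, Cmult, RtoC, Ci; simpl. f_equal; ring.
Qed.

Lemma hcont (F : C -> C) x y : ccont F (x,y) -> rcont (fun t => F (t,y)) x.
Proof.
  intros H e He. destruct (H e He) as [d [Hd H']]. exists d; split; auto.
  intros s Hs. apply H'. replace ((s, y) - (x, y))%C with (RtoC (s - x)).
  rewrite Cmod_R; auto. unfold Cminus, Cplus, Copp, RtoC; simpl. f_equal; ring.
Qed.

Lemma vcont (F : C -> C) x y : ccont F (x,y) -> rcont (fun t => F (x,t)) y.
Proof.
  intros H e He. destruct (H e He) as [d [Hd H']]. exists d; split; auto.
  intros s Hs. apply H'. replace ((x, s) - (x, y))%C with (RtoC (s - y) * Ci)%C.
  rewrite Cmod_mult, Cmod_R, Cmod_Ci, Rmult_1_r; auto. unfold Cminus, Cplus, Copp, Cmult, Ci, RtoC; simpl. f_equal; ring.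
Qed.

Lemma RI_FTC (G g : R -> C) a b : a <= b ->
  (forall t, a <= t <= b -> is_derive (K:=R_AbsRing) (V:=C_R_NormedModule) G t (g t)) ->
  (forall t, a <= t <= b -> rcont g t) -> RI g a b = (G b - G a)%C.
Proof.
  intros Hab HD HC. unfold RI. apply (is_RInt_unique (V:=C_R_CompleteNormedModule)).
  apply (is_RInt_derive (V:=C_R_CompleteNormedModule)).
  intros t Ht. rewrite Rmin_left, Rmax_right in Ht by lra. apply HD; auto.
  intros t Ht. rewrite Rmin_left, Rmax_right in Ht by lra. apply rcont_continuous; auto.
Qed.

Lemma ccont_const (c : C) z : ccont (fun _ => c) z.
Proof. intros e He. exists 1. split. lra. intros. replace (c - c)%C with (RtoC 0) by ring. rewrite Cmod_0. lra. Qed.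

Lemma ccont_plus f g z : ccont f z -> ccont g z -> ccont (fun w => f w + g w)%C z.
Proof.
  intros Hf Hg e He. destruct (Hf (e/2)) as [d1 [Hd1 H1]]. lra. destruct (Hg (e/2)) as [d2 [Hd2 H2]]. lra.
  exists (Rmin d1 d2). split. apply Rmin_pos; lra. intros w Hw.
  pose proof (Rmin_l d1 d2). pose proof (Rmin_r d1 d2).
  specialize (H1 w ltac:(lra)). specialize (H2 w ltac:(lra)).
  pose proof (Cmod_triangle (f w - f z) (g w - g z)) as T.
  replace (f w - f z + (g w - g z))%C with (f w + g w - (f z + g z))%C in T by ring. lra.
Qed.

Lemma ccont_opp f z : ccont f z -> ccont (fun w => - f w)%C z.
Proof. intros Hf e He. destruct (Hf e He) as [d [Hd H]]. exists d. split; auto. intros w Hw.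
  replace (- f w - - f z)%C with (- (f w - f z))%C by ring. rewrite Cmod_opp. auto. Qed.

Lemma ccont_minus f g z : ccont f z -> ccont g z -> ccont (fun w => f w - g w)%C z.
Proof. intros. apply ccont_plus; auto. apply ccont_opp; auto. Qed.

Lemma ccont_mult f g z : ccont f z -> ccont g z -> ccont (fun w => f w * g w)%C z.
Proof.
  intros Hf Hg e He.
  set (A := Cmod (f z) + 1). set (B := Cmod (g z) + 2).
  assert (HA : 1 <= A) by (unfold A; pose proof (Cmod_ge_0 (f z)); lra).
  assert (HB : 1 <= B) by (unfold B; pose proof (Cmod_ge_0 (g z)); lra).
  destruct (Hf (e / (2 * B))) as [d1 [Hd1 H1]]. apply Rdiv_lt_0_compat; lra.
  destruct (Hg (Rmin 1 (e / (2 * A)))) as [d2 [Hd2 H2]].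
  { apply Rmin_pos. lra. apply Rdiv_lt_0_compat; lra. }
  exists (Rmin d1 d2). split. apply Rmin_pos; lra. intros w Hw.
  pose proof (Rmin_l d1 d2). pose proof (Rmin_r d1 d2).
  specialize (H1 w ltac:(lra)). specialize (H2 w ltac:(lra)).
  pose proof (Rmin_l 1 (e / (2 * A))) as M1. pose proof (Rmin_r 1 (e / (2 * A))) as M2.
  replace (f w * g w - f z * g z)%C with ((f w - f z) * g w + f z * (g w - g z))%C by ring.
  eapply Rle_lt_trans. apply Cmod_triangle. rewrite !Cmod_mult.
  assert (Hgw : Cmod (g w) <= B).
  { pose proof (Cmod_triangle (g w - g z) (g z)) as T. replace (g w - g z + g z)%C with (g w) in T by ring.
    unfold B. lra. }
  assert (Ha : Cmod (f w - f z) * (2 * B) < e).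
  { apply (Rmult_lt_reg_r (/ (2 * B))). apply Rinv_0_lt_compat; lra.
    rewrite Rmult_assoc, Rinv_r by lra. rewrite Rmult_1_r. exact H1. }
  assert (Hb : Cmod (g w - g z) * (2 * A) < e).
  { apply (Rmult_lt_reg_r (/ (2 * A))). apply Rinv_0_lt_compat; lra.
    rewrite Rmult_assoc, Rinv_r by lra. rewrite Rmult_1_r. unfold Rdiv in M2. lra. }
  pose proof (Cmod_ge_0 (f w - f z)). pose proof (Cmod_ge_0 (g w - g z)).
  pose proof (Cmod_ge_0 (g w)). pose proof (Cmod_ge_0 (f z)).
  assert (Cmod (f w - f z) * Cmod (g w) <= Cmod (f w - f z) * B) by (apply Rmult_le_compat_l; lra).
  assert (Cmod (f z) * Cmod (g w - g z) <= A * Cmod (g w - g z)) by (apply Rmult_le_compat_r; unfold A; lra).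
  nra.
Qed.

Lemma ccont_scal (c : C) f z : ccont f z -> ccont (fun w => c * f w)%C z.
Proof. intros. apply ccont_mult; auto. apply ccont_const. Qed.

Lemma ccont_comp (f g : C -> C) z : ccont g z -> ccont f (g z) -> ccont (fun w => f (g w)) z.
Proof.
  intros Hg Hf e He. destruct (Hf e He) as [d1 [Hd1 H1]]. destruct (Hg d1 Hd1) as [d2 [Hd2 H2]].
  exists d2. split; auto.
Qed.

Lemma ccont_id z : ccont (fun w => w) z.
Proof. intros e He. exists e. split; auto. Qed.

Definition cint (f : C -> C) (x1 x2 y1 y2 : R) : C :=
  (RI (fun t => f (t,y1)) x1 x2 - RI (fun t => f (t,y2)) x1 x2
   + Ci * (RI (fun t => f (x2,t)) y1 y2 - RI (fun t => f (x1,t)) y1 y2))%C.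

Definition bpred (P : C -> Prop) x1 x2 y1 y2 :=
  (forall t, x1 <= t <= x2 -> P (t,y1) /\ P (t,y2)) /\
  (forall t, y1 <= t <= y2 -> P (x1,t) /\ P (x2,t)).

Definition inrect x1 x2 y1 y2 (z : C) := x1 <= fst z <= x2 /\ y1 <= snd z <= y2.

Lemma bpred_of_rect (P : C -> Prop) x1 x2 y1 y2 : x1 <= x2 -> y1 <= y2 ->
  (forall z, inrect x1 x2 y1 y2 z -> P z) -> bpred P x1 x2 y1 y2.
Proof. intros; split; intros; split; apply H1; unfold inrect; simpl; lra. Qed.

Lemma bpred_impl (P Q : C -> Prop) x1 x2 y1 y2 : (forall z, P z -> Q z) -> bpred P x1 x2 y1 y2 -> bpred Q x1 x2 y1 y2.
Proof. intros H [H1 H2]; split; intros t Ht; [destruct (H1 t Ht) | destruct (H2 t Ht)]; split; auto. Qed.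

Lemma bpred_and (P Q : C -> Prop) x1 x2 y1 y2 : bpred P x1 x2 y1 y2 -> bpred Q x1 x2 y1 y2 -> bpred (fun z => P z /\ Q z) x1 x2 y1 y2.
Proof. intros [H1 H2] [H3 H4]; split; intros t Ht; [destruct (H1 t Ht), (H3 t Ht) | destruct (H2 t Ht), (H4 t Ht)]; split; split; auto. Qed.

Definition bcont f x1 x2 y1 y2 := bpred (ccont f) x1 x2 y1 y2.

Lemma bcont_ex f x1 x2 y1 y2 : x1 <= x2 -> y1 <= y2 -> bcont f x1 x2 y1 y2 ->
  exRI (fun t => f (t,y1)) x1 x2 /\ exRI (fun t => f (t,y2)) x1 x2 /\
  exRI (fun t => f (x1,t)) y1 y2 /\ exRI (fun t => f (x2,t)) y1 y2.
Proof.
  intros Hx Hy [H1 H2]. repeat split; apply exRI_cont; auto; intros t Ht.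
  apply hcont, H1; auto. apply hcont, H1; auto. apply vcont, H2; auto. apply vcont, H2; auto.
Qed.

Lemma bcont_plus f g x1 x2 y1 y2 : bcont f x1 x2 y1 y2 -> bcont g x1 x2 y1 y2 -> bcont (fun z => f z + g z)%C x1 x2 y1 y2.
Proof. intros Hf Hg. generalize (bpred_and _ _ _ _ _ _ Hf Hg). apply bpred_impl. intros z [A B]. apply ccont_plus; auto. Qed.
Lemma bcont_minus f g x1 x2 y1 y2 : bcont f x1 x2 y1 y2 -> bcont g x1 x2 y1 y2 -> bcont (fun z => f z - g z)%C x1 x2 y1 y2.
Proof. intros Hf Hg. generalize (bpred_and _ _ _ _ _ _ Hf Hg). apply bpred_impl. intros z [A B]. apply ccont_minus; auto. Qed.
Lemma bcont_mult f g x1 x2 y1 y2 : bcont f x1 x2 y1 y2 -> bcont g x1 x2 y1 y2 -> bcont (fun z => f z * g z)%C x1 x2 y1 y2.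
Proof. intros Hf Hg. generalize (bpred_and _ _ _ _ _ _ Hf Hg). apply bpred_impl. intros z [A B]. apply ccont_mult; auto. Qed.
Lemma bcont_scal c f x1 x2 y1 y2 : bcont f x1 x2 y1 y2 -> bcont (fun z => c * f z)%C x1 x2 y1 y2.
Proof. intros Hf. generalize Hf. apply bpred_impl. intros z A. apply ccont_scal; auto. Qed.

Lemma cint_plus f g x1 x2 y1 y2 : x1 <= x2 -> y1 <= y2 -> bcont f x1 x2 y1 y2 -> bcont g x1 x2 y1 y2 ->
  cint (fun z => f z + g z)%C x1 x2 y1 y2 = (cint f x1 x2 y1 y2 + cint g x1 x2 y1 y2)%C.
Proof.
  intros Hx Hy Hf Hg. destruct (bcont_ex f _ _ _ _ Hx Hy Hf) as (A1 & A2 & A3 & A4).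
  destruct (bcont_ex g _ _ _ _ Hx Hy Hg) as (B1 & B2 & B3 & B4).
  unfold cint. rewrite !(RI_plus (fun t => f _) (fun t => g _)); auto. ring.
Qed.

Lemma cint_minus f g x1 x2 y1 y2 : x1 <= x2 -> y1 <= y2 -> bcont f x1 x2 y1 y2 -> bcont g x1 x2 y1 y2 ->
  cint (fun z => f z - g z)%C x1 x2 y1 y2 = (cint f x1 x2 y1 y2 - cint g x1 x2 y1 y2)%C.
Proof.
  intros Hx Hy Hf Hg. destruct (bcont_ex f _ _ _ _ Hx Hy Hf) as (A1 & A2 & A3 & A4).
  destruct (bcont_ex g _ _ _ _ Hx Hy Hg) as (B1 & B2 & B3 & B4).
  unfold cint. rewrite !(RI_minus (fun t => f _) (fun t => g _)); auto. ring.
Qed.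

Lemma cint_scal c f x1 x2 y1 y2 : x1 <= x2 -> y1 <= y2 -> bcont f x1 x2 y1 y2 ->
  cint (fun z => c * f z)%C x1 x2 y1 y2 = (c * cint f x1 x2 y1 y2)%C.
Proof.
  intros Hx Hy Hf. destruct (bcont_ex f _ _ _ _ Hx Hy Hf) as (A1 & A2 & A3 & A4).
  unfold cint. rewrite !(RI_scal c (fun t => f _)); auto. ring.
Qed.

Lemma cint_ext f g x1 x2 y1 y2 : x1 <= x2 -> y1 <= y2 -> bpred (fun z => f z = g z) x1 x2 y1 y2 ->
  cint f x1 x2 y1 y2 = cint g x1 x2 y1 y2.
Proof.
  intros Hx Hy [H1 H2]. unfold cint.
  rewrite (RI_ext (fun t => f (t,y1)) (fun t => g (t,y1))) by (auto; intros; apply H1; auto).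
  rewrite (RI_ext (fun t => f (t,y2)) (fun t => g (t,y2))) by (auto; intros; apply H1; auto).
  rewrite (RI_ext (fun t => f (x1,t)) (fun t => g (x1,t))) by (auto; intros; apply H2; auto).
  rewrite (RI_ext (fun t => f (x2,t)) (fun t => g (x2,t))) by (auto; intros; apply H2; auto).
  reflexivity.
Qed.

Lemma cint_bound f x1 x2 y1 y2 M : x1 <= x2 -> y1 <= y2 -> bcont f x1 x2 y1 y2 ->
  bpred (fun z => Cmod (f z) <= M) x1 x2 y1 y2 ->
  Cmod (cint f x1 x2 y1 y2) <= 2 * ((x2 - x1) + (y2 - y1)) * M.
Proof.
  intros Hx Hy Hf [H1 H2]. destruct (bcont_ex f _ _ _ _ Hx Hy Hf) as (A1 & A2 & A3 & A4).
  pose proof (RI_bound _ _ _ M Hx A1 ltac:(intros; apply H1; auto)).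
  pose proof (RI_bound _ _ _ M Hx A2 ltac:(intros; apply H1; auto)).
  pose proof (RI_bound _ _ _ M Hy A3 ltac:(intros; apply H2; auto)).
  pose proof (RI_bound _ _ _ M Hy A4 ltac:(intros; apply H2; auto)).
  unfold cint. eapply Rle_trans. apply Cmod_triangle.
  eapply Rle_trans. apply Rplus_le_compat. eapply Rle_trans. apply Cmod_triangle.
  rewrite Cmod_opp. apply Rle_refl. rewrite Cmod_mult, Cmod_Ci, Rmult_1_l.
  eapply Rle_trans. apply Cmod_triangle. rewrite Cmod_opp. apply Rle_refl.
  lra.
Qed.

Definition rcontin f x1 x2 y1 y2 := forall z, inrect x1 x2 y1 y2 z -> ccont f z.

Lemma hex f x1 x2 y1 y2 a b y : rcontin f x1 x2 y1 y2 -> x1 <= a -> a <= b -> b <= x2 -> y1 <= y <= y2 ->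
  exRI (fun t => f (t,y)) a b.
Proof. intros H. intros. apply exRI_cont; auto. intros t Ht. apply hcont, H. unfold inrect; simpl; lra. Qed.
Lemma vex f x1 x2 y1 y2 a b x : rcontin f x1 x2 y1 y2 -> y1 <= a -> a <= b -> b <= y2 -> x1 <= x <= x2 ->
  exRI (fun t => f (x,t)) a b.
Proof. intros H. intros. apply exRI_cont; auto. intros t Ht. apply vcont, H. unfold inrect; simpl; lra. Qed.

Lemma rcontin_b f x1 x2 y1 y2 : x1 <= x2 -> y1 <= y2 -> rcontin f x1 x2 y1 y2 -> bcont f x1 x2 y1 y2.
Proof. intros. apply bpred_of_rect; auto. Qed.

Lemma rcontin_sub f x1 x2 y1 y2 a1 a2 b1 b2 : x1 <= a1 -> a2 <= x2 -> y1 <= b1 -> b2 <= y2 ->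
  rcontin f x1 x2 y1 y2 -> rcontin f a1 a2 b1 b2.
Proof. intros ? ? ? ? H z [Hz1 Hz2]. apply H. split; lra. Qed.

Lemma cint_split_x f x1 x2 y1 y2 m : x1 <= m <= x2 -> y1 <= y2 -> rcontin f x1 x2 y1 y2 ->
  cint f x1 x2 y1 y2 = (cint f x1 m y1 y2 + cint f m x2 y1 y2)%C.
Proof.
  intros Hm Hy H. unfold cint.
  rewrite <- (RI_Chasles (fun t => f (t,y1)) x1 m x2) by (eapply hex; eauto; lra).
  rewrite <- (RI_Chasles (fun t => f (t,y2)) x1 m x2) by (eapply hex; eauto; lra).
  ring.
Qed.

Lemma cint_split_y f x1 x2 y1 y2 m : x1 <= x2 -> y1 <= m <= y2 -> rcontin f x1 x2 y1 y2 ->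
  cint f x1 x2 y1 y2 = (cint f x1 x2 y1 m + cint f x1 x2 m y2)%C.
Proof.
  intros Hx Hm H. unfold cint.
  rewrite <- (RI_Chasles (fun t => f (x1,t)) y1 m y2) by (eapply vex; eauto; lra).
  rewrite <- (RI_Chasles (fun t => f (x2,t)) y1 m y2) by (eapply vex; eauto; lra).
  ring.
Qed.

Lemma cint_exact (F f : C -> C) x1 x2 y1 y2 : x1 <= x2 -> y1 <= y2 ->
  (forall z, inrect x1 x2 y1 y2 z -> CD F z (f z)) -> rcontin f x1 x2 y1 y2 ->
  cint f x1 x2 y1 y2 = RtoC 0.
Proof.
  intros Hx Hy HD HC.
  assert (Hh : forall y, y1 <= y <= y2 -> RI (fun t => f (t,y)) x1 x2 = (F (x2,y) - F (x1,y))%C).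
  { intros y Hyy. apply (RI_FTC (fun t => F (t,y))); auto.
    intros t Ht. apply hline. apply HD. unfold inrect; simpl; lra.
    intros t Ht. apply hcont, HC. unfold inrect; simpl; lra. }
  assert (Hv : forall x, x1 <= x <= x2 -> (Ci * RI (fun t => f (x,t)) y1 y2)%C = (F (x,y2) - F (x,y1))%C).
  { intros x Hxx. rewrite <- RI_scal by (eapply vex; eauto; lra).
    apply (RI_FTC (fun t => F (x,t))); auto.
    intros t Ht. apply vline. apply HD. unfold inrect; simpl; lra.
    intros t Ht. apply (vcont (fun z => Ci * f z)%C). apply ccont_scal. apply HC. unfold inrect; simpl; lra. }
  unfold cint. rewrite !Hh by lra.
  replace (Ci * (RI (fun t : R => f (x2, t)) y1 y2 - RI (fun t : R => f (x1, t)) y1 y2))%C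
    with (Ci * RI (fun t : R => f (x2, t)) y1 y2 - Ci * RI (fun t : R => f (x1, t)) y1 y2)%C by ring.
  rewrite !Hv by lra. ring.
Qed.

Lemma cint_linear (c0 c1 : C) x1 x2 y1 y2 : x1 <= x2 -> y1 <= y2 ->
  cint (fun z => c0 + c1 * z)%C x1 x2 y1 y2 = RtoC 0.
Proof.
  intros Hx Hy. apply (cint_exact (fun z => c0 * z + (c1 / 2) * (z * z))%C); auto.
  - intros z _. eapply CD_eq. apply CD_plus. apply CD_scal. apply CD_id. apply CD_scal. apply CD_mult; apply CD_id.
    cbv beta. field.
  - intros z _. apply ccont_plus. apply ccont_const. apply ccont_scal. apply ccont_id.
Qed.

Record rect := mkR { rx1 : R; rx2 : R; ry1 : R; ry2 : R }.
Definition ci f r := cint f (rx1 r) (rx2 r) (ry1 r) (ry2 r).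
Definition mxr r := (rx1 r + rx2 r) / 2.
Definition myr r := (ry1 r + ry2 r) / 2.
Definition ch (k : nat) r := match k with
  | O => mkR (rx1 r) (mxr r) (ry1 r) (myr r)
  | 1%nat => mkR (mxr r) (rx2 r) (ry1 r) (myr r)
  | 2%nat => mkR (rx1 r) (mxr r) (myr r) (ry2 r)
  | _ => mkR (mxr r) (rx2 r) (myr r) (ry2 r) end.

Definition rwf r := rx1 r <= rx2 r /\ ry1 r <= ry2 r.
Definition rcf f r := rcontin f (rx1 r) (rx2 r) (ry1 r) (ry2 r).

Lemma ch_prop k r : rwf r -> rwf (ch k r) /\ rx1 r <= rx1 (ch k r) /\ rx2 (ch k r) <= rx2 r /\
  ry1 r <= ry1 (ch k r) /\ ry2 (ch k r) <= ry2 r /\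
  rx2 (ch k r) - rx1 (ch k r) = (rx2 r - rx1 r) / 2 /\ ry2 (ch k r) - ry1 (ch k r) = (ry2 r - ry1 r) / 2.
Proof. unfold rwf. intros [H1 H2]. destruct k as [|[|[|k]]]; simpl; unfold mxr, myr; repeat split; lra. Qed.

Lemma quad f r : rwf r -> rcf f r ->
  ci f r = (ci f (ch 0 r) + ci f (ch 1 r) + ci f (ch 2 r) + ci f (ch 3 r))%C.
Proof.
  unfold rwf, rcf. intros [H1 H2] H. unfold ci; simpl.
  assert (rx1 r <= mxr r <= rx2 r) by (unfold mxr; lra).
  assert (ry1 r <= myr r <= ry2 r) by (unfold myr; lra).
  rewrite (cint_split_x _ _ _ _ _ (mxr r)) by auto.
  rewrite (cint_split_y _ (rx1 r) (mxr r) _ _ (myr r)) by (auto; try lra; eapply rcontin_sub; eauto; lra).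
  rewrite (cint_split_y _ (mxr r) (rx2 r) _ _ (myr r)) by (auto; try lra; eapply rcontin_sub; eauto; lra).
  ring.
Qed.

Definition good f r c := (exists k, (k < 4)%nat /\ c = ch k r) /\ Cmod (ci f r) <= 4 * Cmod (ci f c).

Lemma good_ex f r : rwf r -> rcf f r -> exists c, good f r c.
Proof.
  intros Hw Hc. apply NNPP. intro N.
  assert (Hk : forall k, (k < 4)%nat -> 4 * Cmod (ci f (ch k r)) < Cmod (ci f r)).
  { intros k Hk. apply Rnot_le_lt. intro Hle. apply N. exists (ch k r). split; eauto. }
  pose proof (Hk 0%nat ltac:(lia)). pose proof (Hk 1%nat ltac:(lia)).
  pose proof (Hk 2%nat ltac:(lia)). pose proof (Hk 3%nat ltac:(lia)).
  rewrite (quad f r Hw Hc) in H, H0, H1, H2.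
  set (A := ci f (ch 0 r)) in *. set (B := ci f (ch 1 r)) in *.
  set (C0 := ci f (ch 2 r)) in *. set (D := ci f (ch 3 r)) in *.
  pose proof (Cmod_triangle (A + B + C0) D). pose proof (Cmod_triangle (A + B) C0).
  pose proof (Cmod_triangle A B). lra.
Qed.

Definition nextr f r := epsilon (inhabits r) (good f r).
Fixpoint sq f r0 n := match n with O => r0 | S n => nextr f (sq f r0 n) end.

Lemma pow2_pos n : 0 < 2 ^ n.
Proof. apply pow_lt. lra. Qed.

Lemma pow2_gt n : INR n < 2 ^ n.
Proof. induction n. simpl. lra. rewrite S_INR. simpl. pose proof (pow_R1_Rle 2 n ltac:(lra)). lra. Qed.

Section GoursatSec.
Variable f : C -> C.
Variables a1 a2 b1 b2 : R.
Hypothesis Ha : a1 <= a2.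
Hypothesis Hb : b1 <= b2.
Hypothesis Hc : rcontin f a1 a2 b1 b2.
Let R0 := mkR a1 a2 b1 b2.
Let W := a2 - a1.
Let H := b2 - b1.

Definition Inv n r := rwf r /\ a1 <= rx1 r /\ rx2 r <= a2 /\ b1 <= ry1 r /\ ry2 r <= b2 /\
  rx2 r - rx1 r = W / 2 ^ n /\ ry2 r - ry1 r = H / 2 ^ n /\
  Cmod (ci f R0) <= (2 ^ n * 2 ^ n) * Cmod (ci f r).

Lemma Inv_rcf n r : Inv n r -> rcf f r.
Proof. intros (Hw & ? & ? & ? & ? & _). unfold rcf. eapply rcontin_sub; [..|exact Hc]; auto. Qed.

Lemma next_good n r : Inv n r -> good f r (nextr f r).
Proof. intros HI. unfold nextr. apply epsilon_spec. apply good_ex. apply HI. eapply Inv_rcf; eauto. Qed.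

Lemma Inv_all n : Inv n (sq f R0 n).
Proof.
  induction n.
  - simpl. unfold Inv, rwf, R0, W, H; simpl. repeat split; try lra.
  - simpl sq. pose proof (next_good n _ IHn) as [[k [Hk E]] G].
    destruct IHn as (Hw & I1 & I2 & I3 & I4 & I5 & I6 & I7).
    destruct (ch_prop k _ Hw) as (Hw' & C1 & C2 & C3 & C4 & C5 & C6). rewrite <- E in *.
    unfold Inv. repeat split; try apply Hw'; try lra.
    + rewrite C5, I5. simpl. field. apply Rgt_not_eq, pow2_pos.
    + rewrite C6, I6. simpl. field. apply Rgt_not_eq, pow2_pos.
    + simpl. pose proof (pow2_pos n). pose proof (Cmod_ge_0 (ci f (nextr f (sq f R0 n)))).
      assert (2 ^ n * 2 ^ n * Cmod (ci f (sq f R0 n)) <= 2 ^ n * 2 ^ n * (4 * Cmod (ci f (nextr f (sq f R0 n))))).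
      { apply Rmult_le_compat_l. nra. exact G. }
      nra.
Qed.

Lemma sq_step n : rx1 (sq f R0 n) <= rx1 (sq f R0 (S n)) /\ rx2 (sq f R0 (S n)) <= rx2 (sq f R0 n) /\
  ry1 (sq f R0 n) <= ry1 (sq f R0 (S n)) /\ ry2 (sq f R0 (S n)) <= ry2 (sq f R0 n).
Proof.
  pose proof (Inv_all n) as HI. simpl sq. pose proof (next_good n _ HI) as [[k [Hk E]] G].
  destruct HI as (Hw & _). destruct (ch_prop k _ Hw) as (_ & C1 & C2 & C3 & C4 & _). rewrite <- E in *. tauto.
Qed.

Lemma sq_mono m k : rx1 (sq f R0 m) <= rx1 (sq f R0 (m + k)) /\ rx2 (sq f R0 (m + k)) <= rx2 (sq f R0 m) /\
  ry1 (sq f R0 m) <= ry1 (sq f R0 (m + k)) /\ ry2 (sq f R0 (m + k)) <= ry2 (sq f R0 m).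
Proof.
  induction k. rewrite Nat.add_0_r. lra.
  replace (m + S k)%nat with (S (m + k)) by lia. pose proof (sq_step (m + k)). lra.
Qed.

Lemma sq_cross m n : rx1 (sq f R0 m) <= rx2 (sq f R0 n) /\ ry1 (sq f R0 m) <= ry2 (sq f R0 n).
Proof.
  destruct (Nat.le_ge_cases m n) as [Hmn|Hmn].
  - destruct (Nat.le_exists_sub m n Hmn) as [k [Ek _]]. rewrite Nat.add_comm in Ek. subst n.
    pose proof (sq_mono m k). pose proof (Inv_all (m + k)) as [[Hw1 Hw2] _]. lra.
  - destruct (Nat.le_exists_sub n m Hmn) as [k [Ek _]]. rewrite Nat.add_comm in Ek. subst m.
    pose proof (sq_mono n k). pose proof (Inv_all (n + k)) as [[Hw1 Hw2] _]. lra.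
Qed.

Lemma limit_point : exists xs ys, forall n,
  rx1 (sq f R0 n) <= xs <= rx2 (sq f R0 n) /\ ry1 (sq f R0 n) <= ys <= ry2 (sq f R0 n).
Proof.
  destruct (completeness (fun x => exists n, x = rx1 (sq f R0 n))) as [xs [Hx1 Hx2]].
  { exists a2. intros x [n ->]. pose proof (Inv_all n) as (_ & _ & I2 & _). pose proof (Inv_all n) as [[? ?] _]. lra. }
  { exists (rx1 (sq f R0 0)). exists 0%nat. reflexivity. }
  destruct (completeness (fun y => exists n, y = ry1 (sq f R0 n))) as [ys [Hy1 Hy2]].
  { exists b2. intros x [n ->]. pose proof (Inv_all n) as (_ & _ & _ & _ & I4 & _). pose proof (Inv_all n) as [[? ?] _]. lra. }
  { exists (ry1 (sq f R0 0)). exists 0%nat. reflexivity. }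
  exists xs, ys. intros n. repeat split.
  - apply Hx1. exists n; auto.
  - apply Hx2. intros x [m ->]. apply sq_cross.
  - apply Hy1. exists n; auto.
  - apply Hy2. intros x [m ->]. apply sq_cross.
Qed.

Lemma goursat_bound : (forall z, inrect a1 a2 b1 b2 z -> ex_derive (K:=C_AbsRing) (V:=C_NormedModule) f z) ->
  forall eps, 0 < eps -> Cmod (ci f R0) <= 2 * eps * ((W + H) * (W + H)).
Proof.
  intros HD eps He.
  destruct limit_point as [xs [ys Hl]].
  set (zs := (xs, ys) : C).
  assert (Hzs : inrect a1 a2 b1 b2 zs).
  { pose proof (Hl 0%nat). simpl in H0. unfold inrect, zs; simpl; lra. }
  destruct (HD zs Hzs) as [l Hdl].
  rewrite CD_eps in Hdl. destruct (Hdl eps He) as [d [Hd Hdd]].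
  destruct (INR_unbounded ((W + H) / d)) as [n Hn].
  pose proof (pow2_gt n). pose proof (pow2_pos n) as HP.
  assert (HWH : 0 <= W + H) by (unfold W, H; lra).
  assert (Hsmall : (W + H) / 2 ^ n < d).
  { apply (Rmult_lt_reg_r (2 ^ n)); auto. unfold Rdiv. rewrite Rmult_assoc, Rinv_l by lra.
    rewrite Rmult_1_r. apply (Rmult_lt_reg_r (/ d)). apply Rinv_0_lt_compat; auto.
    replace (d * 2 ^ n * / d) with (2 ^ n) by (field; lra). unfold Rdiv in Hn. lra. }
  set (r := sq f R0 n).
  destruct (Inv_all n) as ((Hw1 & Hw2) & I1 & I2 & I3 & I4 & I5 & I6 & I7). fold r in Hw1, Hw2, I1, I2, I3, I4, I5, I6, I7.
  destruct (Hl n) as [L1 L2]. fold r in L1, L2.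
  set (Lf := fun z => (f zs + (z - zs) * l)%C).
  assert (Hrc : rcf f r) by (apply (Inv_rcf n); apply Inv_all).
  unfold rcf in Hrc.
  assert (HLc : rcontin Lf (rx1 r) (rx2 r) (ry1 r) (ry2 r)).
  { intros z _. unfold Lf. apply ccont_plus. apply ccont_const. apply ccont_mult. apply ccont_minus.
    apply ccont_id. apply ccont_const. apply ccont_const. }
  assert (E0 : ci f r = cint (fun z => f z - Lf z)%C (rx1 r) (rx2 r) (ry1 r) (ry2 r)).
  { rewrite cint_minus; auto; try (apply rcontin_b; auto).
    replace (cint Lf (rx1 r) (rx2 r) (ry1 r) (ry2 r)) with (RtoC 0). unfold ci. ring.
    symmetry. unfold Lf.
    rewrite (cint_ext _ (fun z => (f zs - zs * l) + l * z)%C); auto.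
    apply cint_linear; auto. apply bpred_of_rect; auto. intros z _. ring. }
  set (s := (W + H) / 2 ^ n).
  assert (Hbd : Cmod (ci f r) <= 2 * ((rx2 r - rx1 r) + (ry2 r - ry1 r)) * (eps * s)).
  { rewrite E0. apply cint_bound; auto. apply rcontin_b; auto.
    intros z Hz; apply ccont_minus; auto.
    apply bpred_of_rect; auto. intros z [Hz1 Hz2].
    assert (Cmod (z - zs) <= s).
    { eapply Rle_trans. apply Cmod_le_sum. unfold zs, s. simpl.
      replace ((W + H) / 2 ^ n) with (W / 2 ^ n + H / 2 ^ n) by (field; lra).
      rewrite <- I5, <- I6. unfold Rabs. destruct (Rcase_abs _); destruct (Rcase_abs _); lra. }
    assert (Cmod (z - zs) < d) by (unfold s in *; lra).
    specialize (Hdd (z - zs)%C ltac:(lra)). replace (zs + (z - zs))%C with z in Hdd by ring.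
    unfold Lf. replace (f z - (f zs + (z - zs) * l))%C with (f z - f zs - (z - zs) * l)%C by ring.
    eapply Rle_trans. exact Hdd. apply Rmult_le_compat_l; lra. }
  rewrite I5, I6 in Hbd. fold R0 in I7.
  replace (W / 2 ^ n + H / 2 ^ n) with s in Hbd by (unfold s; field; lra).
  assert (Cmod (ci f R0) <= 2 ^ n * 2 ^ n * (2 * s * (eps * s))).
  { eapply Rle_trans. exact I7. apply Rmult_le_compat_l. nra. exact Hbd. }
  replace (2 ^ n * 2 ^ n * (2 * s * (eps * s))) with (2 * eps * ((W + H) * (W + H))) in H1.
  exact H1. unfold s. field. lra.
Qed.

End GoursatSec.

Theorem goursat f a1 a2 b1 b2 : a1 <= a2 -> b1 <= b2 ->
  (forall z, inrect a1 a2 b1 b2 z -> ex_derive (K:=C_AbsRing) (V:=C_NormedModule) f z) ->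
  cint f a1 a2 b1 b2 = RtoC 0.
Proof.
  intros Ha Hb HD.
  assert (Hc : rcontin f a1 a2 b1 b2) by (intros z Hz; apply ex_CD_cont; auto).
  pose proof (goursat_bound f a1 a2 b1 b2 Ha Hb Hc HD) as G.
  change (cint f a1 a2 b1 b2) with (ci f (mkR a1 a2 b1 b2)).
  destruct (Req_dec (Cmod (ci f (mkR a1 a2 b1 b2))) 0) as [E|E]. apply Cmod_eq_0; auto.
  exfalso. set (K := (a2 - a1 + (b2 - b1)) * (a2 - a1 + (b2 - b1))).
  assert (0 <= K) by (unfold K; nra).
  pose proof (Cmod_ge_0 (ci f (mkR a1 a2 b1 b2))).
  set (c := Cmod (ci f (mkR a1 a2 b1 b2))) in *.
  specialize (G (c / (4 * K + 1))). fold K in G.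
  assert (0 < c / (4 * K + 1)) by (apply Rdiv_lt_0_compat; lra).
  specialize (G H1).
  assert (c / (4 * K + 1) * (4 * K + 1) = c) by (field; lra).
  nra.
Qed.

Lemma cint_five f x1 x2 y1 y2 p q u v : x1 <= p -> p <= q -> q <= x2 -> y1 <= u -> u <= v -> v <= y2 ->
  rcontin f x1 x2 y1 y2 ->
  cint f x1 x2 y1 y2 = (cint f x1 p y1 y2 + cint f p q y1 u + cint f p q u v + cint f p q v y2 + cint f q x2 y1 y2)%C.
Proof.
  intros. rewrite (cint_split_x f x1 x2 y1 y2 p) by (try lra; auto).
  rewrite (cint_split_x f p x2 y1 y2 q) by (try lra; eapply rcontin_sub; eauto; lra).
  rewrite (cint_split_y f p q y1 y2 u) by (try lra; eapply rcontin_sub; eauto; lra).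
  rewrite (cint_split_y f p q u y2 v) by (try lra; eapply rcontin_sub; eauto; lra).
  ring.
Qed.

Lemma CD_shift_inv z w : w <> z -> CD (fun x => / (x - z))%C w (- / ((w - z) * (w - z)))%C.
Proof.
  intros H. assert (Hwz : (w - z)%C <> RtoC 0). { intro E. apply H. replace w with ((w - z) + z)%C by ring. rewrite E. ring. }
  eapply CD_eq. apply CD_inv. apply CD_minus. apply CD_id. apply CD_const. exact Hwz.
  cbv beta. field. exact Hwz.
Qed.

Lemma ccont_shift_inv z w : w <> z -> ccont (fun x => / (x - z))%C w.
Proof. intros H. eapply CD_cont. apply CD_shift_inv. exact H. Qed.

Definition strict x1 x2 y1 y2 (z : C) := x1 < fst z < x2 /\ y1 < snd z < y2.

Lemma strict_bneq x1 x2 y1 y2 z : x1 <= x2 -> y1 <= y2 -> strict x1 x2 y1 y2 z -> bpred (fun w => w <> z) x1 x2 y1 y2.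
Proof.
  intros Hx Hy [H1 H2]. split; intros t Ht; split; intro E; subst z; simpl in *; lra.
Qed.

Lemma cauchy f x1 x2 y1 y2 z : strict x1 x2 y1 y2 z ->
  (forall w, inrect x1 x2 y1 y2 w -> ex_derive (K:=C_AbsRing) (V:=C_NormedModule) f w) ->
  cint (fun w => f w * / (w - z))%C x1 x2 y1 y2 = (f z * cint (fun w => 1 * / (w - z)) x1 x2 y1 y2)%C.
Proof.
  intros Hs HD. destruct Hs as [[Hx1 Hx2] [Hy1 Hy2]].
  assert (Hzr : inrect x1 x2 y1 y2 z) by (unfold inrect; lra).
  set (g := fun w => if Ceq_dec w z then C_derive f z else ((f w - f z) / (w - z))%C).
  destruct (HD z Hzr) as [l Hl].
  assert (Hl' : C_derive f z = l) by (apply CD_Cderive; auto).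
  assert (Hgd : forall w, w <> z -> inrect x1 x2 y1 y2 w -> ex_derive (K:=C_AbsRing) (V:=C_NormedModule) g w).
  { intros w Hwz Hw. destruct (HD w Hw) as [lw Hlw].
    assert (Hwz' : (w - z)%C <> RtoC 0). { intro E. apply Hwz. replace w with ((w - z) + z)%C by ring. rewrite E. ring. }
    eexists. eapply (CD_ext_loc (fun x => (f x - f z) / (x - z))%C g w _ (Cmod (w - z))).
    apply Cneq_Cmod; auto.
    intros x Hx. unfold g. destruct (Ceq_dec x z) as [E|E]; auto. subst x. rewrite Cmod_sub_sym in Hx. lra.
    apply CD_div. apply CD_minus. exact Hlw. apply CD_const. apply CD_minus. apply CD_id. apply CD_const. exact Hwz'. }
  assert (Hgz : ccont g z).
  { intros e He. rewrite CD_eps in Hl. destruct (Hl (e/2)) as [d [Hd Hdd]]. lra.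
    exists d. split; auto. intros w Hw. unfold g. destruct (Ceq_dec z z) as [_|C]; [|congruence].
    destruct (Ceq_dec w z) as [E|E]. replace (C_derive f z - C_derive f z)%C with (RtoC 0) by ring. rewrite Cmod_0. lra.
    assert (Hwz' : (w - z)%C <> RtoC 0). { intro E'. apply E. replace w with ((w - z) + z)%C by ring. rewrite E'. ring. }
    specialize (Hdd (w - z)%C Hw). replace (z + (w - z))%C with w in Hdd by ring.
    rewrite Hl'. replace ((f w - f z) / (w - z) - l)%C with ((f w - f z - (w - z) * l) / (w - z))%C by (field; auto).
    rewrite Cmod_div by auto. pose proof (Cneq_Cmod _ Hwz').
    apply (Rmult_lt_reg_r (Cmod (w - z))); auto. unfold Rdiv. rewrite Rmult_assoc, Rinv_l by lra. nra. }
  assert (Hgc : rcontin g x1 x2 y1 y2).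
  { intros w Hw. destruct (Ceq_dec w z) as [E|E]. subst; auto. apply ex_CD_cont. apply Hgd; auto. }
  assert (Hg0 : cint g x1 x2 y1 y2 = RtoC 0).
  { destruct (Hgz 1 Rlt_0_1) as [d [Hd Hdd]].
    set (M := Cmod (g z) + 1).
    set (b0 := Rmin (d / 4) (Rmin (Rmin (fst z - x1) (x2 - fst z)) (Rmin (snd z - y1) (y2 - snd z)))).
    assert (Hb0 : 0 < b0). { unfold b0. repeat apply Rmin_pos; lra. }
    assert (Hb0d : b0 <= d / 4) by apply Rmin_l.
    assert (Hb0x : b0 <= fst z - x1 /\ b0 <= x2 - fst z /\ b0 <= snd z - y1 /\ b0 <= y2 - snd z).
    { unfold b0. pose proof (Rmin_r (d/4) (Rmin (Rmin (fst z - x1) (x2 - fst z)) (Rmin (snd z - y1) (y2 - snd z)))).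
      pose proof (Rmin_l (Rmin (fst z - x1) (x2 - fst z)) (Rmin (snd z - y1) (y2 - snd z))).
      pose proof (Rmin_r (Rmin (fst z - x1) (x2 - fst z)) (Rmin (snd z - y1) (y2 - snd z))).
      pose proof (Rmin_l (fst z - x1) (x2 - fst z)). pose proof (Rmin_r (fst z - x1) (x2 - fst z)).
      pose proof (Rmin_l (snd z - y1) (y2 - snd z)). pose proof (Rmin_r (snd z - y1) (y2 - snd z)). lra. }
    assert (Hbound : forall b, 0 < b -> b < b0 -> Cmod (cint g x1 x2 y1 y2) <= 8 * b * M).
    { intros b Hb Hbb.
      rewrite (cint_five g x1 x2 y1 y2 (fst z - b) (fst z + b) (snd z - b) (snd z + b)) by (auto; lra).
      assert (Hgo : forall p q u v, x1 <= p <= q -> q <= x2 -> y1 <= u <= v -> v <= y2 ->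
         ~ inrect p q u v z -> cint g p q u v = RtoC 0).
      { intros p q u v Hp Hq Hu Hv Hn. apply goursat; try lra. intros w Hw. apply Hgd.
        intro E; subst w; contradiction. unfold inrect in *; lra. }
      rewrite (Hgo x1 (fst z - b) y1 y2) by (unfold inrect; simpl; lra).
      rewrite (Hgo (fst z - b) (fst z + b) y1 (snd z - b)) by (unfold inrect; simpl; lra).
      rewrite (Hgo (fst z - b) (fst z + b) (snd z + b) y2) by (unfold inrect; simpl; lra).
      rewrite (Hgo (fst z + b) x2 y1 y2) by (unfold inrect; simpl; lra).
      replace (0 + 0 + cint g (fst z - b) (fst z + b) (snd z - b) (snd z + b) + 0 + 0)%C
        with (cint g (fst z - b) (fst z + b) (snd z - b) (snd z + b)) by ring.
      replace (8 * b * M) with (2 * ((fst z + b - (fst z - b)) + (snd z + b - (snd z - b))) * M) by ring.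
      apply cint_bound; try lra. apply rcontin_b; try lra. eapply rcontin_sub; eauto; lra.
      apply bpred_of_rect; try lra. intros w [Hw1 Hw2].
      assert (Cmod (w - z) < d).
      { eapply Rle_lt_trans. apply Cmod_le_sum. simpl. unfold Rabs.
        destruct (Rcase_abs _); destruct (Rcase_abs _); lra. }
      specialize (Hdd w H). pose proof (Cmod_triangle (g w - g z) (g z)).
      replace (g w - g z + g z)%C with (g w) in H0 by ring. unfold M. lra. }
    apply Cmod_eq_0. destruct (Req_dec (Cmod (cint g x1 x2 y1 y2)) 0) as [E|E]; auto. exfalso.
    pose proof (Cmod_ge_0 (cint g x1 x2 y1 y2)).
    set (c := Cmod (cint g x1 x2 y1 y2)) in *.
    assert (HM : 1 <= M) by (unfold M; pose proof (Cmod_ge_0 (g z)); lra).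
    set (b := Rmin (b0 / 2) (c / (16 * M))).
    assert (0 < b) by (unfold b; apply Rmin_pos; [lra | apply Rdiv_lt_0_compat; lra]).
    assert (b < b0) by (unfold b; pose proof (Rmin_l (b0/2) (c / (16 * M))); lra).
    specialize (Hbound b H0 H1).
    assert (b * (16 * M) <= c).
    { unfold b. pose proof (Rmin_r (b0/2) (c / (16 * M))).
      apply (Rmult_le_reg_r (/ (16 * M))). apply Rinv_0_lt_compat; lra.
      rewrite Rmult_assoc, Rinv_r by lra. rewrite Rmult_1_r. exact H2. }
    lra. }
  assert (Hb : bpred (fun w => w <> z) x1 x2 y1 y2) by (apply strict_bneq; try lra; split; split; lra).
  assert (Hbi : bcont (fun w => 1 * / (w - z))%C x1 x2 y1 y2).
  { generalize Hb. apply bpred_impl. intros w Hw. apply ccont_scal. apply ccont_shift_inv; auto. }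
  assert (Hfc : rcontin f x1 x2 y1 y2) by (intros w Hw; apply ex_CD_cont; auto).
  assert (Hgb : bcont g x1 x2 y1 y2) by (apply rcontin_b; auto; lra).
  assert (Hbs : bcont (fun w => f z * (1 * / (w - z)))%C x1 x2 y1 y2) by (apply bcont_scal; auto).
  rewrite (cint_ext _ (fun w => g w + f z * (1 * / (w - z)))%C); try lra.
  rewrite cint_plus; try lra; auto. rewrite Hg0. rewrite cint_scal; try lra; auto. ring.
  generalize Hb. apply bpred_impl. intros w Hw. unfold g. destruct (Ceq_dec w z) as [E|E]. contradiction.
  assert (Hwz' : (w - z)%C <> RtoC 0). { intro E'. apply E. replace w with ((w - z) + z)%C by ring. rewrite E'. ring. }
  field. auto.
Qed.

Lemma rcont_snd g t : rcont g t -> continuous (fun s => snd (g s)) t.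
Proof.
  intros H. apply filterlim_locally. intros eps. destruct (H eps (cond_pos eps)) as [d [Hd H']].
  exists (mkposreal d Hd). intros s Hs. specialize (H' s Hs).
  unfold ball; simpl; unfold AbsRing_ball, abs, minus, plus, opp; simpl.
  pose proof (Cmod_snd (g s - g t)%C). simpl in H0. lra.
Qed.
Lemma rcont_fst g t : rcont g t -> continuous (fun s => fst (g s)) t.
Proof.
  intros H. apply filterlim_locally. intros eps. destruct (H eps (cond_pos eps)) as [d [Hd H']].
  exists (mkposreal d Hd). intros s Hs. specialize (H' s Hs).
  unfold ball; simpl; unfold AbsRing_ball, abs, minus, plus, opp; simpl.
  pose proof (Cmod_fst (g s - g t)%C). simpl in H0. lra.
Qed.

Lemma RI_fst g a b : exRI g a b -> fst (RI g a b) = RInt (fun t => fst (g t)) a b.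
Proof.
  intros H. symmetry. apply (is_RInt_unique (V:=R_CompleteNormedModule)).
  apply (is_RInt_fct_extend_fst (U:=R_NormedModule) (V:=R_NormedModule)).
  apply (RInt_correct (V:=C_R_CompleteNormedModule)). exact H.
Qed.

Lemma RI_snd_pos g a b : a < b -> (forall t, a <= t <= b -> rcont g t) -> (forall t, a <= t <= b -> 0 < snd (g t)) ->
  0 < snd (RI g a b).
Proof.
  intros Hab Hc Hp. rewrite RI_snd by (apply exRI_cont; [lra | auto]).
  apply RInt_gt_0; auto. intros; apply Hp; lra. intros; apply rcont_snd; auto.
Qed.
Lemma RI_fst_pos g a b : a < b -> (forall t, a <= t <= b -> rcont g t) -> (forall t, a <= t <= b -> 0 < fst (g t)) ->
  0 < fst (RI g a b).
Proof.
  intros Hab Hc Hp. rewrite RI_fst by (apply exRI_cont; [lra | auto]).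
  apply RInt_gt_0; auto. intros; apply Hp; lra. intros; apply rcont_fst; auto.
Qed.

Lemma rcont_neg g t : rcont g t -> rcont (fun s => RtoC (-1) * g s)%C t.
Proof. intros H e He. destruct (H e He) as [d [Hd H']]. exists d; split; auto. intros s Hs.
  replace (RtoC (-1) * g s - RtoC (-1) * g t)%C with (- (g s - g t))%C by ring. rewrite Cmod_opp; auto. Qed.

Lemma RI_snd_neg g a b : a < b -> (forall t, a <= t <= b -> rcont g t) -> (forall t, a <= t <= b -> snd (g t) < 0) ->
  snd (RI g a b) < 0.
Proof.
  intros Hab Hc Hp.
  assert (0 < snd (RI (fun t => RtoC (-1) * g t)%C a b)).
  { apply RI_snd_pos; auto. intros; apply rcont_neg; auto. intros t Ht. specialize (Hp t Ht).
    unfold Cmult, RtoC; simpl. lra. }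
  rewrite RI_scal in H by (apply exRI_cont; [lra | auto]). unfold Cmult, RtoC in H; cbn [fst snd] in H. lra.
Qed.
Lemma RI_fst_neg g a b : a < b -> (forall t, a <= t <= b -> rcont g t) -> (forall t, a <= t <= b -> fst (g t) < 0) ->
  fst (RI g a b) < 0.
Proof.
  intros Hab Hc Hp.
  assert (0 < fst (RI (fun t => RtoC (-1) * g t)%C a b)).
  { apply RI_fst_pos; auto. intros; apply rcont_neg; auto. intros t Ht. specialize (Hp t Ht).
    unfold Cmult, RtoC; simpl. lra. }
  rewrite RI_scal in H by (apply exRI_cont; [lra | auto]). unfold Cmult, RtoC in H; cbn [fst snd] in H. lra.
Qed.

Lemma inv_snd_pos (u : C) : snd u < 0 -> 0 < snd (1 * / u)%C.
Proof. destruct u as [a b]. intros H. unfold Cinv, Cmult, RtoC; cbn [fst snd] in *.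
  assert (0 < a ^ 2 + b ^ 2) by nra. assert (0 < - b / (a ^ 2 + b ^ 2)) by (apply Rdiv_lt_0_compat; lra).
  replace (1 * (- b / (a ^ 2 + b ^ 2)) + 0 * (a / (a ^ 2 + b ^ 2))) with (- b / (a ^ 2 + b ^ 2)) by (field; lra). lra. Qed.
Lemma inv_snd_neg (u : C) : 0 < snd u -> snd (1 * / u)%C < 0.
Proof. destruct u as [a b]. intros H. unfold Cinv, Cmult, RtoC; cbn [fst snd] in *.
  assert (0 < a ^ 2 + b ^ 2) by nra. assert (0 < b / (a ^ 2 + b ^ 2)) by (apply Rdiv_lt_0_compat; lra).
  replace (1 * (- b / (a ^ 2 + b ^ 2)) + 0 * (a / (a ^ 2 + b ^ 2))) with (- (b / (a ^ 2 + b ^ 2))) by (field; lra). lra. Qed.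
Lemma inv_fst_pos (u : C) : 0 < fst u -> 0 < fst (1 * / u)%C.
Proof. destruct u as [a b]. intros H. unfold Cinv, Cmult, RtoC; cbn [fst snd] in *.
  assert (0 < a ^ 2 + b ^ 2) by nra. assert (0 < a / (a ^ 2 + b ^ 2)) by (apply Rdiv_lt_0_compat; lra).
  replace (1 * (a / (a ^ 2 + b ^ 2)) - 0 * (- b / (a ^ 2 + b ^ 2))) with (a / (a ^ 2 + b ^ 2)) by (field; lra). lra. Qed.
Lemma inv_fst_neg (u : C) : fst u < 0 -> fst (1 * / u)%C < 0.
Proof. destruct u as [a b]. intros H. unfold Cinv, Cmult, RtoC; cbn [fst snd] in *.
  assert (0 < a ^ 2 + b ^ 2) by nra. assert (0 < - a / (a ^ 2 + b ^ 2)) by (apply Rdiv_lt_0_compat; lra).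
  replace (1 * (a / (a ^ 2 + b ^ 2)) - 0 * (- b / (a ^ 2 + b ^ 2))) with (- (- a / (a ^ 2 + b ^ 2))) by (field; lra). lra. Qed.

Lemma snd_comb (A B C0 D : C) : snd (A - B + Ci * (C0 - D))%C = snd A - snd B + (fst C0 - fst D).
Proof. destruct A, B, C0, D. unfold Cplus, Cminus, Copp, Cmult, Ci; simpl. ring. Qed.

Lemma index_nonzero x1 x2 y1 y2 z : strict x1 x2 y1 y2 z ->
  cint (fun w => 1 * / (w - z))%C x1 x2 y1 y2 <> RtoC 0.
Proof.
  intros Hs. destruct Hs as [[Hx1 Hx2] [Hy1 Hy2]].
  assert (Hc : forall w, w <> z -> ccont (fun w => 1 * / (w - z))%C w).
  { intros w Hw. apply ccont_scal. apply ccont_shift_inv; auto. }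
  assert (A1 : 0 < snd (RI (fun t => 1 * / ((t, y1) - z))%C x1 x2)).
  { apply RI_snd_pos. lra.
    - intros t Ht. apply (hcont (fun w => 1 * / (w - z))%C). apply Hc. intro E. subst z. simpl in *. lra.
    - intros t Ht. apply inv_snd_pos. simpl. lra. }
  assert (A2 : snd (RI (fun t => 1 * / ((t, y2) - z))%C x1 x2) < 0).
  { apply RI_snd_neg. lra.
    - intros t Ht. apply (hcont (fun w => 1 * / (w - z))%C). apply Hc. intro E. subst z. simpl in *. lra.
    - intros t Ht. apply inv_snd_neg. simpl. lra. }
  assert (A3 : 0 < fst (RI (fun t => 1 * / ((x2, t) - z))%C y1 y2)).
  { apply RI_fst_pos. lra.
    - intros t Ht. apply (vcont (fun w => 1 * / (w - z))%C). apply Hc. intro E. subst z. simpl in *. lra.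
    - intros t Ht. apply inv_fst_pos. simpl. lra. }
  assert (A4 : fst (RI (fun t => 1 * / ((x1, t) - z))%C y1 y2) < 0).
  { apply RI_fst_neg. lra.
    - intros t Ht. apply (vcont (fun w => 1 * / (w - z))%C). apply Hc. intro E. subst z. simpl in *. lra.
    - intros t Ht. apply inv_fst_neg. simpl. lra. }
  intro E. assert (HH := f_equal snd E). unfold cint in HH. rewrite snd_comb in HH.
  change (snd (RtoC 0)) with 0 in HH. lra.
Qed.

Lemma rcont_Cmod_pt g t : rcont g t -> continuity_pt (fun s => Cmod (g s)) t.
Proof.
  intros H eps He. destruct (H eps He) as [d [Hd H']]. exists d. split; auto.
  intros s [_ Hs]. simpl in *. unfold R_dist in *. specialize (H' s Hs).
  pose proof (Cmod_rev (g s) (g t)). pose proof (Cmod_rev (g t) (g s)). rewrite Cmod_sub_sym in H1.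
  unfold Rabs. destruct (Rcase_abs _); lra.
Qed.

Lemma seg_bound g a b : a <= b -> (forall t, a <= t <= b -> rcont g t) ->
  exists M, 0 <= M /\ forall t, a <= t <= b -> Cmod (g t) <= M.
Proof.
  intros Hab Hc. destruct (continuity_ab_maj (fun s => Cmod (g s)) a b Hab) as [m [Hm Hm']].
  intros c Hcc. apply rcont_Cmod_pt; auto.
  exists (Cmod (g m)). split. apply Cmod_ge_0. auto.
Qed.

Lemma bcont_bounded phi x1 x2 y1 y2 : x1 <= x2 -> y1 <= y2 -> bcont phi x1 x2 y1 y2 ->
  exists M, 0 <= M /\ bpred (fun u => Cmod (phi u) <= M) x1 x2 y1 y2.
Proof.
  intros Hx Hy [H1 H2].
  destruct (seg_bound (fun t => phi (t,y1)) x1 x2 Hx) as [M1 [P1 B1]]. intros t Ht; apply hcont, H1; auto.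
  destruct (seg_bound (fun t => phi (t,y2)) x1 x2 Hx) as [M2 [P2 B2]]. intros t Ht; apply hcont, H1; auto.
  destruct (seg_bound (fun t => phi (x1,t)) y1 y2 Hy) as [M3 [P3 B3]]. intros t Ht; apply vcont, H2; auto.
  destruct (seg_bound (fun t => phi (x2,t)) y1 y2 Hy) as [M4 [P4 B4]]. intros t Ht; apply vcont, H2; auto.
  exists (M1 + M2 + M3 + M4). split. lra. split; intros t Ht; split.
  specialize (B1 t Ht); lra. specialize (B2 t Ht); lra. specialize (B3 t Ht); lra. specialize (B4 t Ht); lra.
Qed.

Lemma cint_param (phi : C -> C) (K : C -> C -> C) (K1 : C -> C) x1 x2 y1 y2 z r Cc :
  x1 <= x2 -> y1 <= y2 -> 0 < r -> 0 <= Cc -> bcont phi x1 x2 y1 y2 ->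
  (forall w, Cmod (w - z) < r -> bcont (fun u => phi u * K u w)%C x1 x2 y1 y2) ->
  bcont (fun u => phi u * K1 u)%C x1 x2 y1 y2 ->
  bpred (fun u => forall h, Cmod h < r -> Cmod (K u (z + h) - K u z - h * K1 u)%C <= Cc * (Cmod h * Cmod h)) x1 x2 y1 y2 ->
  CD (fun w => cint (fun u => phi u * K u w)%C x1 x2 y1 y2) z (cint (fun u => phi u * K1 u)%C x1 x2 y1 y2).
Proof.
  intros Hx Hy Hr HC Hphi HK HK1 HB.
  destruct (bcont_bounded phi x1 x2 y1 y2 Hx Hy Hphi) as [Mp [HMp HBp]].
  apply CD_eps. intros eps He.
  set (P := (x2 - x1) + (y2 - y1)).
  assert (HP : 0 <= P) by (unfold P; lra).
  set (Q := 2 * P * Mp * Cc + 1).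
  assert (HQ : 1 <= Q) by (unfold Q; assert (0 <= P * Mp) by nra; assert (0 <= P * Mp * Cc) by nra; lra).
  exists (Rmin r (eps / Q)). split. apply Rmin_pos; auto. apply Rdiv_lt_0_compat; lra.
  intros h Hh. pose proof (Rmin_l r (eps / Q)) as M1. pose proof (Rmin_r r (eps / Q)) as M2.
  assert (Hzh : Cmod (z + h - z) < r). { replace (z + h - z)%C with h by ring. lra. }
  assert (Hz0 : Cmod (z - z) < r). { replace (z - z)%C with (RtoC 0) by ring. rewrite Cmod_0. lra. }
  pose proof (HK _ Hzh) as B1. pose proof (HK _ Hz0) as B0.
  rewrite <- (cint_scal h), <- cint_minus, <- cint_minus; auto.
  2:{ apply bcont_minus; auto. }
  2:{ apply bcont_scal; auto. }
  pose proof (Cmod_ge_0 h) as Hh0.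
  apply Rle_trans with (2 * P * (Mp * (Cc * (Cmod h * Cmod h)))).
  - apply cint_bound; auto.
    + apply bcont_minus. apply bcont_minus; auto. apply bcont_scal; auto.
    + generalize (bpred_and _ _ _ _ _ _ HBp HB). apply bpred_impl. intros u [Hu1 Hu2].
      replace (phi u * K u (z + h) - phi u * K u z - h * (phi u * K1 u))%C
        with (phi u * (K u (z + h) - K u z - h * K1 u))%C by ring.
      rewrite Cmod_mult. apply Rmult_le_compat; auto. apply Cmod_ge_0. apply Cmod_ge_0.
      apply Hu2. lra.
  - assert (Hhq : Cmod h * Q <= eps).
    { apply (Rmult_le_reg_r (/ Q)). apply Rinv_0_lt_compat; lra. rewrite Rmult_assoc, Rinv_r by lra.
      unfold Rdiv in M2. lra. }
    assert (2 * P * (Mp * (Cc * (Cmod h * Cmod h))) = (2 * P * Mp * Cc) * Cmod h * Cmod h) by ring.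
    rewrite H. unfold Q in Hhq.
    assert (0 <= 2 * P * Mp * Cc) by (assert (0 <= P * Mp) by nra; assert (0 <= P * Mp * Cc) by nra; lra).
    nra.
Qed.

Lemma div_le (a D c : R) : 0 < D -> a <= c * D -> a / D <= c.
Proof. intros HD H. apply (Rmult_le_reg_r D); auto. unfold Rdiv. rewrite Rmult_assoc, Rinv_l by lra. lra. Qed.

Lemma kern1_bound (v h : C) d : 0 < d -> d <= Cmod v -> Cmod h < d / 2 ->
  Cmod (/ (v - h) - / v - h * / (v * v))%C <= 2 / (d * d * d) * (Cmod h * Cmod h).
Proof.
  intros Hd Hv Hh. pose proof (Cmod_ge_0 h).
  assert (Hv0 : v <> RtoC 0) by (apply Cmod_pos_neq; lra).
  pose proof (Cmod_rev v h) as T.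
  assert (Hvh : (v - h)%C <> RtoC 0) by (apply Cmod_pos_neq; lra).
  replace (/ (v - h) - / v - h * / (v * v))%C with (h * h / (v * v * (v - h)))%C by (field; auto).
  rewrite Cmod_div, !Cmod_mult. 2:{ repeat apply Cmult_neq_0; auto. }
  set (U := Cmod v) in *. set (V := Cmod (v - h)) in *. set (Hm := Cmod h) in *.
  assert (HV : U / 2 <= V) by lra.
  apply div_le. assert (0 < U) by lra. assert (0 < V) by lra. repeat apply Rmult_lt_0_compat; lra.
  assert (d * d * d <= 2 * (U * U * V)).
  { assert (d * d <= U * U) by nra. assert (0 <= d * d) by nra.
    assert (d * d * d <= U * U * U) by nra. nra. }
  assert (0 <= Hm * Hm) by nra.
  replace (2 / (d * d * d) * (Hm * Hm) * (U * U * V)) with ((Hm * Hm) * (2 * (U * U * V) / (d * d * d))) by (field; lra).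
  rewrite <- (Rmult_1_r (Hm * Hm)) at 1. apply Rmult_le_compat_l; auto.
  apply (Rmult_le_reg_r (d * d * d)). repeat apply Rmult_lt_0_compat; lra.
  unfold Rdiv. rewrite (Rmult_assoc (2 * (U * U * V))), Rinv_l by (apply Rgt_not_eq; repeat apply Rmult_lt_0_compat; lra). lra.
Qed.

Lemma kern2_bound (v h : C) d : 0 < d -> d <= Cmod v -> Cmod h < d / 2 ->
  Cmod (/ ((v - h) * (v - h)) - / (v * v) - h * (2 / (v * v * v)))%C <= 16 / (d * d * d * d) * (Cmod h * Cmod h).
Proof.
  intros Hd Hv Hh. pose proof (Cmod_ge_0 h).
  assert (Hv0 : v <> RtoC 0) by (apply Cmod_pos_neq; lra).
  pose proof (Cmod_rev v h) as T.
  assert (Hvh : (v - h)%C <> RtoC 0) by (apply Cmod_pos_neq; lra).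
  replace (/ ((v - h) * (v - h)) - / (v * v) - h * (2 / (v * v * v)))%C
    with (h * h * (3 * v - 2 * h) / (v * v * v * ((v - h) * (v - h))))%C by (field; auto).
  rewrite Cmod_div, !Cmod_mult. 2:{ repeat apply Cmult_neq_0; auto. }
  assert (HN : Cmod (3 * v - 2 * h) <= 3 * Cmod v + 2 * Cmod h).
  { eapply Rle_trans. apply (Cmod_triangle (3 * v) (- (2 * h))). rewrite Cmod_opp, !Cmod_mult.
    replace (Cmod 3) with 3. replace (Cmod 2) with 2. lra.
    rewrite Cmod_R, Rabs_right; lra. rewrite Cmod_R, Rabs_right; lra. }
  set (U := Cmod v) in *. set (V := Cmod (v - h)) in *. set (Hm := Cmod h) in *.
  set (N := Cmod (3 * v - 2 * h)) in *.
  assert (HV : U / 2 <= V) by lra. assert (0 < U) by lra. assert (0 < V) by lra.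
  assert (HN4 : N <= 4 * U) by lra. assert (0 <= N) by apply Cmod_ge_0.
  apply div_le. repeat apply Rmult_lt_0_compat; lra.
  assert (Hd4 : 0 < d * d * d * d) by (repeat apply Rmult_lt_0_compat; lra).
  assert (HU4 : d * d * d * d <= U * U * U * U).
  { assert (d * d <= U * U) by nra. assert (0 <= d * d) by nra. nra. }
  assert (HK : N * (d * d * d * d) <= 16 * (U * U * U * (V * V))).
  { assert (U * U <= 4 * (V * V)) by nra.
    assert (N * (d * d * d * d) <= 4 * U * (U * U * U * U)) by (apply Rmult_le_compat; lra).
    assert (0 <= U * U * U) by (assert (0 <= U * U) by nra; nra).
    assert (U * U * U * (U * U) <= U * U * U * (4 * (V * V))) by (apply Rmult_le_compat_l; lra).
    nra. }
  assert (0 <= Hm * Hm) by nra.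
  replace (16 / (d * d * d * d) * (Hm * Hm) * (U * U * U * (V * V)))
    with ((Hm * Hm) * (16 * (U * U * U * (V * V)) / (d * d * d * d))) by (field; lra).
  apply Rmult_le_compat_l; auto.
  apply (Rmult_le_reg_r (d * d * d * d)); auto.
  unfold Rdiv. rewrite (Rmult_assoc (16 * (U * U * U * (V * V)))), Rinv_l by lra. lra.
Qed.

Definition Kint (phi : C -> C) x1 x2 y1 y2 (w : C) := cint (fun u => phi u * / (u - w))%C x1 x2 y1 y2.
Definition Kint2 (phi : C -> C) x1 x2 y1 y2 (w : C) := cint (fun u => phi u * / ((u - w) * (u - w)))%C x1 x2 y1 y2.
Definition Kint3 (phi : C -> C) x1 x2 y1 y2 (w : C) := cint (fun u => phi u * (2 / ((u - w) * (u - w) * (u - w))))%C x1 x2 y1 y2.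

Definition dist_b x1 x2 y1 y2 (z : C) := Rmin (Rmin (fst z - x1) (x2 - fst z)) (Rmin (snd z - y1) (y2 - snd z)).

Lemma dist_b_prop x1 x2 y1 y2 z : dist_b x1 x2 y1 y2 z <= fst z - x1 /\ dist_b x1 x2 y1 y2 z <= x2 - fst z /\
  dist_b x1 x2 y1 y2 z <= snd z - y1 /\ dist_b x1 x2 y1 y2 z <= y2 - snd z.
Proof.
  unfold dist_b.
  pose proof (Rmin_l (Rmin (fst z - x1) (x2 - fst z)) (Rmin (snd z - y1) (y2 - snd z))).
  pose proof (Rmin_r (Rmin (fst z - x1) (x2 - fst z)) (Rmin (snd z - y1) (y2 - snd z))).
  pose proof (Rmin_l (fst z - x1) (x2 - fst z)). pose proof (Rmin_r (fst z - x1) (x2 - fst z)).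
  pose proof (Rmin_l (snd z - y1) (y2 - snd z)). pose proof (Rmin_r (snd z - y1) (y2 - snd z)). lra.
Qed.

Lemma dist_b_pos x1 x2 y1 y2 z : strict x1 x2 y1 y2 z -> 0 < dist_b x1 x2 y1 y2 z.
Proof. intros [[? ?] [? ?]]. unfold dist_b. repeat apply Rmin_pos; lra. Qed.

Lemma strict_near x1 x2 y1 y2 z u : strict x1 x2 y1 y2 z -> Cmod (u - z) < dist_b x1 x2 y1 y2 z -> strict x1 x2 y1 y2 u.
Proof.
  intros Hs Hu. pose proof (dist_b_prop x1 x2 y1 y2 z).
  pose proof (Cmod_fst (u - z)%C). pose proof (Cmod_snd (u - z)%C). simpl in *.
  unfold Rabs in *. destruct (Rcase_abs _); destruct (Rcase_abs _); unfold strict; lra.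
Qed.

Lemma bdist x1 x2 y1 y2 z : x1 <= x2 -> y1 <= y2 -> bpred (fun u => dist_b x1 x2 y1 y2 z <= Cmod (u - z)) x1 x2 y1 y2.
Proof.
  intros Hx Hy. pose proof (dist_b_prop x1 x2 y1 y2 z) as D.
  split; intros t Ht; split.
  - eapply Rle_trans. 2: apply Cmod_snd. simpl. unfold Rabs. destruct (Rcase_abs _); lra.
  - eapply Rle_trans. 2: apply Cmod_snd. simpl. unfold Rabs. destruct (Rcase_abs _); lra.
  - eapply Rle_trans. 2: apply Cmod_fst. simpl. unfold Rabs. destruct (Rcase_abs _); lra.
  - eapply Rle_trans. 2: apply Cmod_fst. simpl. unfold Rabs. destruct (Rcase_abs _); lra.
Qed.

Lemma ccont_inv g u : ccont g u -> g u <> RtoC 0 -> ccont (fun x => / g x)%C u.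
Proof. intros H Hu. apply (ccont_comp Cinv g); auto. eapply CD_cont. apply CD_Cinv; auto. Qed.

Lemma neq_sub (u z : C) : u <> z -> (u - z)%C <> RtoC 0.
Proof. intros H E. apply H. replace u with ((u - z) + z)%C by ring. rewrite E. ring. Qed.

Lemma ccont_sub (z u : C) : ccont (fun x => x - z)%C u.
Proof. apply ccont_minus. apply ccont_id. apply ccont_const. Qed.

Lemma ccont_k1 z u : u <> z -> ccont (fun x => / (x - z))%C u.
Proof. intros H. apply ccont_inv. apply ccont_sub. apply neq_sub; auto. Qed.
Lemma ccont_k2 z u : u <> z -> ccont (fun x => / ((x - z) * (x - z)))%C u.
Proof. intros H. apply ccont_inv. apply ccont_mult; apply ccont_sub. apply Cmult_neq_0; apply neq_sub; auto. Qed.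
Lemma ccont_k3 z u : u <> z -> ccont (fun x => 2 / ((x - z) * (x - z) * (x - z)))%C u.
Proof. intros H. apply ccont_mult. apply ccont_const. apply ccont_inv. apply ccont_mult. apply ccont_mult; apply ccont_sub.
  apply ccont_sub. repeat apply Cmult_neq_0; apply neq_sub; auto. Qed.

Lemma bneq_near x1 x2 y1 y2 z w : x1 <= x2 -> y1 <= y2 -> Cmod (w - z) < dist_b x1 x2 y1 y2 z ->
  bpred (fun u => u <> w) x1 x2 y1 y2.
Proof.
  intros Hx Hy Hw. generalize (bdist x1 x2 y1 y2 z Hx Hy). apply bpred_impl. intros u Hu E. subst u. lra.
Qed.

Lemma Kint_D phi x1 x2 y1 y2 z : x1 <= x2 -> y1 <= y2 -> strict x1 x2 y1 y2 z -> bcont phi x1 x2 y1 y2 ->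
  CD (Kint phi x1 x2 y1 y2) z (Kint2 phi x1 x2 y1 y2 z).
Proof.
  intros Hx Hy Hs Hp. set (d := dist_b x1 x2 y1 y2 z). assert (Hd : 0 < d) by (apply dist_b_pos; auto).
  unfold Kint, Kint2.
  apply (cint_param phi (fun u w => / (u - w))%C (fun u => / ((u - z) * (u - z)))%C _ _ _ _ z (d / 2) (2 / (d * d * d))); auto.
  - lra.
  - apply Rlt_le, Rdiv_lt_0_compat. lra. repeat apply Rmult_lt_0_compat; lra.
  - intros w Hw. apply bcont_mult; auto. generalize (bneq_near x1 x2 y1 y2 z w Hx Hy ltac:(fold d; lra)).
    apply bpred_impl. intros u Hu. apply ccont_k1; auto.
  - apply bcont_mult; auto. assert (Hz : Cmod (z - z) < d) by (replace (z - z)%C with (RtoC 0) by ring; rewrite Cmod_0; lra).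
    generalize (bneq_near x1 x2 y1 y2 z z Hx Hy Hz). apply bpred_impl. intros u Hu. apply ccont_k2; auto.
  - generalize (bdist x1 x2 y1 y2 z Hx Hy). apply bpred_impl. intros u Hu h Hh.
    replace (u - (z + h))%C with ((u - z) - h)%C by ring. apply kern1_bound; auto.
Qed.

Lemma Kint2_D phi x1 x2 y1 y2 z : x1 <= x2 -> y1 <= y2 -> strict x1 x2 y1 y2 z -> bcont phi x1 x2 y1 y2 ->
  CD (Kint2 phi x1 x2 y1 y2) z (Kint3 phi x1 x2 y1 y2 z).
Proof.
  intros Hx Hy Hs Hp. set (d := dist_b x1 x2 y1 y2 z). assert (Hd : 0 < d) by (apply dist_b_pos; auto).
  unfold Kint2, Kint3.
  apply (cint_param phi (fun u w => / ((u - w) * (u - w)))%C (fun u => 2 / ((u - z) * (u - z) * (u - z)))%C _ _ _ _ z (d / 2) (16 / (d * d * d * d))); auto.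
  - lra.
  - apply Rlt_le, Rdiv_lt_0_compat. lra. repeat apply Rmult_lt_0_compat; lra.
  - intros w Hw. apply bcont_mult; auto. generalize (bneq_near x1 x2 y1 y2 z w Hx Hy ltac:(fold d; lra)).
    apply bpred_impl. intros u Hu. apply ccont_k2; auto.
  - apply bcont_mult; auto. assert (Hz : Cmod (z - z) < d) by (replace (z - z)%C with (RtoC 0) by ring; rewrite Cmod_0; lra).
    generalize (bneq_near x1 x2 y1 y2 z z Hx Hy Hz). apply bpred_impl. intros u Hu. apply ccont_k3; auto.
  - generalize (bdist x1 x2 y1 y2 z Hx Hy). apply bpred_impl. intros u Hu h Hh.
    replace (u - (z + h))%C with ((u - z) - h)%C by ring. apply kern2_bound; auto.
Qed.

Section Repr.
Variable f : C -> C.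
Variables x1 x2 y1 y2 : R.
Hypothesis Hx : x1 <= x2.
Hypothesis Hy : y1 <= y2.
Hypothesis HD : forall u, inrect x1 x2 y1 y2 u -> ex_derive (K:=C_AbsRing) (V:=C_NormedModule) f u.

Let one := fun _ : C => RtoC 1.

Lemma bcont_f : bcont f x1 x2 y1 y2.
Proof. apply rcontin_b; auto. intros u Hu. apply ex_CD_cont; auto. Qed.
Lemma bcont_one : bcont one x1 x2 y1 y2.
Proof. apply bpred_of_rect; auto. intros; apply ccont_const. Qed.

Lemma Kone_nz w : strict x1 x2 y1 y2 w -> Kint one x1 x2 y1 y2 w <> RtoC 0.
Proof. intros Hw. apply index_nonzero; auto. Qed.

Lemma repr w : strict x1 x2 y1 y2 w -> f w = (Kint f x1 x2 y1 y2 w / Kint one x1 x2 y1 y2 w)%C.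
Proof.
  intros Hw. unfold Kint at 1. rewrite cauchy; auto. change (cint (fun u => 1 * / (u - w))%C x1 x2 y1 y2) with (Kint one x1 x2 y1 y2 w).
  field. apply Kone_nz; auto.
Qed.

Definition Qf w := ((Kint2 f x1 x2 y1 y2 w * Kint one x1 x2 y1 y2 w - Kint f x1 x2 y1 y2 w * Kint2 one x1 x2 y1 y2 w)
   / (Kint one x1 x2 y1 y2 w * Kint one x1 x2 y1 y2 w))%C.

Lemma f_D w : strict x1 x2 y1 y2 w -> CD f w (Qf w).
Proof.
  intros Hw. pose proof (dist_b_pos _ _ _ _ _ Hw) as Hd.
  eapply (CD_ext_loc (fun u => Kint f x1 x2 y1 y2 u / Kint one x1 x2 y1 y2 u)%C f w _ (dist_b x1 x2 y1 y2 w) Hd).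
  - intros u Hu. symmetry. apply repr. eapply strict_near; eauto.
  - apply CD_div. apply Kint_D; auto. apply bcont_f. apply Kint_D; auto. apply bcont_one. apply Kone_nz; auto.
Qed.

Lemma Cderive_repr w : strict x1 x2 y1 y2 w -> C_derive f w = Qf w.
Proof. intros Hw. apply CD_Cderive. apply f_D; auto. Qed.

Lemma Cderive_D z : strict x1 x2 y1 y2 z -> ex_derive (K:=C_AbsRing) (V:=C_NormedModule) (C_derive f) z.
Proof.
  intros Hz. pose proof (dist_b_pos _ _ _ _ _ Hz) as Hd.
  eexists. eapply (CD_ext_loc Qf (C_derive f) z _ (dist_b x1 x2 y1 y2 z) Hd).
  - intros u Hu. symmetry. apply Cderive_repr. eapply strict_near; eauto.
  - unfold Qf. apply CD_div. apply CD_minus; apply CD_mult.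
    apply Kint2_D; auto. apply bcont_f. apply Kint_D; auto. apply bcont_one.
    apply Kint_D; auto. apply bcont_f. apply Kint2_D; auto. apply bcont_one.
    apply CD_mult; apply Kint_D; auto; apply bcont_one.
    apply Cmult_neq_0; apply Kone_nz; auto.
Qed.

End Repr.

Lemma Cmod_sub_le (u z : C) : Cmod u <= Cmod z + Cmod (u - z).
Proof. pose proof (Cmod_triangle z (u - z)). replace (z + (u - z))%C with u in H by ring. lra. Qed.

Lemma square_in_D z : inD z -> forall u,
  inrect (fst z - (1 - Cmod z) / 3) (fst z + (1 - Cmod z) / 3) (snd z - (1 - Cmod z) / 3) (snd z + (1 - Cmod z) / 3) u -> inD u.
Proof.
  intros Hz u [Hu1 Hu2]. unfold inD in *. pose proof (Cmod_sub_le u z).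
  assert (H0 : Cmod (u - z) <= Rabs (fst u - fst z) + Rabs (snd u - snd z)) by exact (Cmod_le_sum _).
  assert (Rabs (fst u - fst z) + Rabs (snd u - snd z) <= 2 * ((1 - Cmod z) / 3)).
  { unfold Rabs. destruct (Rcase_abs _); destruct (Rcase_abs _); lra. }
  lra.
Qed.

Lemma center_strict z a : 0 < a -> strict (fst z - a) (fst z + a) (snd z - a) (snd z + a) z.
Proof. intros. unfold strict; lra. Qed.

Theorem deriv_analytic f : analytic_D f -> forall z, inD z -> ex_derive (K:=C_AbsRing) (V:=C_NormedModule) (C_derive f) z.
Proof.
  intros Hf z Hz. set (a := (1 - Cmod z) / 3). assert (Ha : 0 < a) by (unfold a, inD in *; lra).
  apply (Cderive_D f (fst z - a) (fst z + a) (snd z - a) (snd z + a)); try lra.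
  intros u Hu. apply Hf. apply (square_in_D z Hz u Hu).
  apply center_strict; auto.
Qed.

Lemma Cinv_0 : (/ RtoC 0)%C = RtoC 0.
Proof. unfold Cinv, RtoC; simpl. f_equal; unfold Rdiv; ring. Qed.

Lemma h_at_0 f : classA f -> exists hf : C -> C, exists rho, 0 < rho /\
  (forall w, Cmod w < rho -> w <> RtoC 0 -> f w = (w * hf w)%C) /\ hf (RtoC 0) = RtoC 1 /\
  CD hf (RtoC 0) ((Kint2 (fun u => f u / u)%C (-1/3) (1/3) (-1/3) (1/3) (RtoC 0) * Kint (fun _ => RtoC 1) (-1/3) (1/3) (-1/3) (1/3) (RtoC 0)
     - Kint (fun u => f u / u)%C (-1/3) (1/3) (-1/3) (1/3) (RtoC 0) * Kint2 (fun _ => RtoC 1) (-1/3) (1/3) (-1/3) (1/3) (RtoC 0))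
     / (Kint (fun _ => RtoC 1) (-1/3) (1/3) (-1/3) (1/3) (RtoC 0) * Kint (fun _ => RtoC 1) (-1/3) (1/3) (-1/3) (1/3) (RtoC 0)))%C.
Proof.
  intros [Hf [Hf0 Hf1]].
  set (x1 := -1/3). set (x2 := 1/3).
  assert (Hx : x1 <= x2) by (unfold x1, x2; lra).
  assert (HD : forall u, inrect x1 x2 x1 x2 u -> ex_derive (K:=C_AbsRing) (V:=C_NormedModule) f u).
  { intros u Hu. apply Hf. pose proof (square_in_D (RtoC 0)) as S. unfold inD in S |- *. rewrite Cmod_0 in S.
    apply S. lra. unfold inrect in *. simpl. unfold x1, x2 in Hu. lra. }
  set (one := fun _ : C => RtoC 1).
  set (phi := fun u => (f u / u)%C).
  set (hf := fun w => (Kint phi x1 x2 x1 x2 w / Kint one x1 x2 x1 x2 w)%C).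
  assert (Hs0 : strict x1 x2 x1 x2 (RtoC 0)) by (unfold strict, x1, x2; simpl; lra).
  assert (Hbn0 : bpred (fun u => u <> RtoC 0) x1 x2 x1 x2) by (apply strict_bneq; auto).
  assert (Hbphi : bcont phi x1 x2 x1 x2).
  { generalize (bpred_and _ _ _ _ _ _ Hbn0 (bcont_f f x1 x2 x1 x2 Hx Hx HD)). apply bpred_impl.
    intros u [Hu1 Hu2]. unfold phi. apply ccont_mult; auto. apply ccont_inv. apply ccont_id. auto. }
  assert (HK0 : Kint f x1 x2 x1 x2 (RtoC 0) = RtoC 0).
  { pose proof (repr f x1 x2 x1 x2 HD (RtoC 0) Hs0) as E. rewrite Hf0 in E.
    pose proof (Kone_nz x1 x2 x1 x2 (RtoC 0) Hs0) as N.
    transitivity ((Kint f x1 x2 x1 x2 (RtoC 0) / Kint (fun _ => RtoC 1) x1 x2 x1 x2 (RtoC 0)) * Kint (fun _ => RtoC 1) x1 x2 x1 x2 (RtoC 0))%C.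
    field. auto. rewrite <- E. ring. }
  exists hf, (dist_b x1 x2 x1 x2 (RtoC 0)). split. apply dist_b_pos; auto. split; [|split].
  - intros w Hw Hw0.
    assert (Hsw : strict x1 x2 x1 x2 w). { apply (strict_near _ _ _ _ (RtoC 0)); auto. replace (w - RtoC 0)%C with w by ring. auto. }
    assert (Hw' : Cmod (w - RtoC 0) < dist_b x1 x2 x1 x2 (RtoC 0)) by (replace (w - RtoC 0)%C with w by ring; auto).
    pose proof (bneq_near x1 x2 x1 x2 (RtoC 0) w Hx Hx Hw') as Hbnw.
    assert (HKw : (Kint f x1 x2 x1 x2 w - Kint f x1 x2 x1 x2 (RtoC 0))%C = (w * Kint phi x1 x2 x1 x2 w)%C).
    { unfold Kint. rewrite <- cint_minus; auto.
      2:{ generalize (bpred_and _ _ _ _ _ _ Hbnw (bcont_f f x1 x2 x1 x2 Hx Hx HD)). apply bpred_impl.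
          intros u [Hu1 Hu2]. apply ccont_mult; auto. apply ccont_k1; auto. }
      2:{ generalize (bpred_and _ _ _ _ _ _ Hbn0 (bcont_f f x1 x2 x1 x2 Hx Hx HD)). apply bpred_impl.
          intros u [Hu1 Hu2]. apply ccont_mult; auto. apply ccont_k1; auto. }
      rewrite <- cint_scal; auto.
      2:{ generalize (bpred_and _ _ _ _ _ _ Hbnw Hbphi). apply bpred_impl.
          intros u [Hu1 Hu2]. apply ccont_mult; auto. apply ccont_k1; auto. }
      apply cint_ext; auto. generalize (bpred_and _ _ _ _ _ _ Hbnw Hbn0). apply bpred_impl.
      intros u [Hu1 Hu2]. unfold phi. pose proof (neq_sub u w Hu1).
      replace (u - RtoC 0)%C with u by ring. field. split; auto. }
    rewrite HK0 in HKw. replace (Kint f x1 x2 x1 x2 w - RtoC 0)%C with (Kint f x1 x2 x1 x2 w) in HKw by ring.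
    rewrite (repr f x1 x2 x1 x2 HD w Hsw). unfold hf. rewrite HKw.
    unfold one. field. apply Kone_nz; auto.
  - unfold hf.
    pose proof (Cderive_repr f x1 x2 x1 x2 Hx Hx HD (RtoC 0) Hs0) as E.
    rewrite (CD_Cderive f (RtoC 0) (RtoC 1) Hf1) in E. unfold Qf in E. rewrite HK0 in E.
    assert (Ephi : Kint phi x1 x2 x1 x2 (RtoC 0) = Kint2 f x1 x2 x1 x2 (RtoC 0)).
    { unfold Kint, Kint2. apply cint_ext; auto. generalize Hbn0. apply bpred_impl. intros u Hu.
      unfold phi. replace (u - RtoC 0)%C with u by ring. field. auto. }
    rewrite Ephi. pose proof (Kone_nz x1 x2 x1 x2 (RtoC 0) Hs0) as N.
    symmetry in E. etransitivity; [| exact E]. unfold one. field. auto.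
  - unfold hf. apply CD_div. apply Kint_D; auto. apply Kint_D; auto. apply bcont_one; auto.
    apply Kone_nz; auto.
Qed.

Lemma zfpf_analytic f : classA f -> (forall z, inD z -> z <> RtoC 0 -> f z <> RtoC 0) ->
  forall z, inD z -> ex_derive (K:=C_AbsRing) (V:=C_NormedModule) (zfpf f) z.
Proof.
  intros HA Hnz z Hz. pose proof HA as [Hf [Hf0 Hf1]].
  destruct (deriv_analytic f Hf z Hz) as [l1 Hl1].
  destruct (Ceq_dec z (RtoC 0)) as [E|E].
  - subst z. destruct (h_at_0 f HA) as [hf [rho [Hrho [Hfh [Hh0 Hhd]]]]].
    destruct (CD_cont _ _ _ Hhd (1/2)) as [r1 [Hr1 Hc]]. lra.
    assert (Hhnz : forall w, Cmod (w - RtoC 0) < r1 -> hf w <> RtoC 0).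
    { intros w Hw E. specialize (Hc w Hw). rewrite E, Hh0 in Hc.
      replace (RtoC 0 - RtoC 1)%C with (- RtoC 1)%C in Hc by ring. rewrite Cmod_opp, Cmod_1 in Hc. lra. }
    eexists. apply (CD_ext_loc (fun w => C_derive f w / hf w)%C (zfpf f) (RtoC 0) _ (Rmin rho r1)).
    apply Rmin_pos; auto.
    + intros w Hw. pose proof (Rmin_l rho r1). pose proof (Rmin_r rho r1).
      unfold zfpf. destruct (Ceq_dec w (RtoC 0)) as [Ew|Ew].
      * subst w. rewrite (CD_Cderive f (RtoC 0) (RtoC 1) Hf1), Hh0. field.
      * assert (Hhw : hf w <> RtoC 0) by (apply Hhnz; lra).
        rewrite (Hfh w) by (replace (w - RtoC 0)%C with w in Hw by ring; auto; lra).
        field. split; auto.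
    + apply CD_div. exact Hl1. exact Hhd. rewrite Hh0. intro E. injection E. lra.
  - destruct (Hf z Hz) as [l0 Hl0].
    eexists. apply (CD_ext_loc (fun w => w * C_derive f w / f w)%C (zfpf f) z _ (Cmod z)).
    apply Cneq_Cmod; auto.
    + intros w Hw. unfold zfpf. destruct (Ceq_dec w (RtoC 0)) as [Ew|Ew]; auto.
      subst w. replace (RtoC 0 - z)%C with (- z)%C in Hw by ring. rewrite Cmod_opp in Hw. lra.
    + apply CD_div. apply CD_mult. apply CD_id. exact Hl1. apply Hl0.
      apply Hnz; auto.
Qed.

Definition csqrt (z : C) : C :=
  (sqrt ((Cmod z + fst z) / 2), snd z / (2 * sqrt ((Cmod z + fst z) / 2))).

Lemma csqrt_pos_arg z : 0 < fst z -> 0 < (Cmod z + fst z) / 2.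
Proof. intros H. pose proof (Cmod_fst z). unfold Rabs in H0. destruct (Rcase_abs _); lra. Qed.

Lemma csqrt_re z : 0 < fst z -> 0 < fst (csqrt z).
Proof. intros H. unfold csqrt; simpl. apply sqrt_lt_R0. apply csqrt_pos_arg; auto. Qed.

Lemma csqrt_sq z : 0 < fst z -> (csqrt z * csqrt z)%C = z.
Proof.
  intros H. pose proof (csqrt_pos_arg z H) as Hp.
  pose proof (sqrt_lt_R0 _ Hp) as Ha. pose proof (sqrt_sqrt _ (Rlt_le _ _ Hp)) as Hs.
  set (a := sqrt ((Cmod z + fst z) / 2)) in *.
  pose proof (Cmod_sqr z) as Hm. pose proof (Cmod_ge_0 z).
  destruct z as [x y]. unfold csqrt, Cmult. fold a. simpl in *. f_equal.
  - assert (E : y / (2 * a) * (y / (2 * a)) = y * y / (4 * (a * a))) by (field; lra).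
    rewrite E, Hs. set (m := Cmod (x,y)) in *.
    replace (y * y) with ((m - x) * (m + x)) by nra. field. lra.
  - field. lra.
Qed.

Lemma Cmod_ge_fst (z : C) : fst z <= Cmod z.
Proof. pose proof (Cmod_fst z). unfold Rabs in H. destruct (Rcase_abs _); lra. Qed.

Lemma csqrt_D z : 0 < fst z -> CD csqrt z (/ (2 * csqrt z))%C.
Proof.
  intros Hz. apply CD_eps. intros eps He.
  set (s0 := csqrt z). set (c0 := fst s0).
  assert (Hc0 : 0 < c0) by (apply csqrt_re; auto).
  assert (Hs0m : c0 <= Cmod s0) by apply Cmod_ge_fst.
  exists (Rmin (fst z) (eps * 2 * c0 * c0 * c0)). split.
  apply Rmin_pos; auto. repeat apply Rmult_lt_0_compat; lra.
  intros h Hh. pose proof (Rmin_l (fst z) (eps * 2 * c0 * c0 * c0)) as M1.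
  pose proof (Rmin_r (fst z) (eps * 2 * c0 * c0 * c0)) as M2.
  assert (Hzh : 0 < fst (z + h)%C).
  { simpl. pose proof (Cmod_fst h). unfold Rabs in H. destruct (Rcase_abs _); lra. }
  set (s := csqrt (z + h)%C).
  assert (Hc : 0 < fst s) by (apply csqrt_re; auto).
  assert (Hss : (s * s)%C = (z + h)%C) by (apply csqrt_sq; auto).
  assert (Hs0s : (s0 * s0)%C = z) by (apply csqrt_sq; auto).
  assert (Hsum : c0 <= Cmod (s + s0)).
  { eapply Rle_trans. 2: apply Cmod_ge_fst. change (fst (s + s0)%C) with (fst s + fst s0). fold c0. lra. }
  assert (Hsumnz : (s + s0)%C <> RtoC 0) by (apply Cmod_pos_neq; lra).
  assert (Hs0nz : s0 <> RtoC 0) by (apply Cmod_pos_neq; lra).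
  assert (Hdiff : (s - s0)%C = (h / (s + s0))%C).
  { replace h with ((s * s) - (s0 * s0))%C by (rewrite Hss, Hs0s; ring). field. auto. }
  assert (Hexp : (s - s0 - h * / (2 * s0))%C = (h * (s0 - s) / (2 * s0 * (s + s0)))%C).
  { rewrite Hdiff. field. split; auto. }
  rewrite Hexp.
  assert (Hd : Cmod (s0 - s) <= Cmod h / c0).
  { replace (s0 - s)%C with (- (s - s0))%C by ring. rewrite Cmod_opp, Hdiff, Cmod_div by auto.
    unfold Rdiv. apply Rmult_le_compat_l. apply Cmod_ge_0. apply Rinv_le_contravar; auto. }
  rewrite Cmod_div, !Cmod_mult.
  2:{ apply Cmult_neq_0; auto. apply Cmult_neq_0; auto. intro E. injection E. lra. }
  replace (Cmod 2) with 2 by (rewrite Cmod_R, Rabs_right; lra).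
  pose proof (Cmod_ge_0 h) as Hh0.
  apply div_le. repeat apply Rmult_lt_0_compat; lra.
  assert (Cmod h * Cmod (s0 - s) <= Cmod h * (Cmod h / c0)) by (apply Rmult_le_compat_l; auto).
  assert (Cmod h / c0 <= eps * 2 * c0 * c0) .
  { apply (Rmult_le_reg_r c0); auto. unfold Rdiv. rewrite Rmult_assoc, Rinv_l by lra. lra. }
  assert (2 * c0 * c0 <= 2 * Cmod s0 * Cmod (s + s0)).
  { assert (0 <= c0 * c0) by nra. apply Rmult_le_compat; try lra. }
  assert (Cmod h * (Cmod h / c0) <= Cmod h * (eps * 2 * c0 * c0)) by (apply Rmult_le_compat_l; auto).
  assert (eps * Cmod h * (2 * c0 * c0) <= eps * Cmod h * (2 * Cmod s0 * Cmod (s + s0))).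
  { apply Rmult_le_compat_l; auto. assert (0 <= eps) by lra. nra. }
  nra.
Qed.

Lemma csqrt_one : csqrt (RtoC 1) = RtoC 1.
Proof.
  unfold csqrt. rewrite Cmod_1. simpl. replace ((1 + 1) / 2) with 1 by field. rewrite sqrt_1.
  unfold RtoC. f_equal. field.
Qed.

Definition region (zeta : C) := Cmod zeta * Cmod zeta < 3 * fst zeta.

Lemma region_fst z : region z -> 0 < fst z.
Proof. unfold region. intros H. pose proof (Cmod_ge_0 z). nra. Qed.

Lemma region_inD (z : C) : region z -> inD (csqrt z - 1)%C.
Proof.
  intros H. pose proof (region_fst z H) as Hz.
  pose proof (csqrt_sq z Hz) as Hs. pose proof (csqrt_re z Hz) as Ha.
  set (s := csqrt z) in *. unfold region in H. rewrite <- Hs in H. rewrite Cmod_mult in H.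
  unfold inD. destruct s as [a b]. pose proof (Cmod_sqr (a,b)) as E1. pose proof (Cmod_sqr ((a, b) - 1)%C) as E2.
  simpl in *. set (r := Cmod (a,b)) in *. pose proof (Cmod_ge_0 ((a,b) - 1)%C).
  assert (Hr : r * r = a * a + b * b) by exact E1.
  assert (Hr2 : r * r < 2 * a).
  { assert (r * r * (r * r) < 3 * (a * a - b * b)) by (simpl in H; nra).
    assert (0 <= r * r) by nra. nra. }
  assert (Cmod ((a, b) - 1)%C * Cmod ((a, b) - 1)%C < 1).
  { rewrite E2. simpl. nra. }
  nra.
Qed.

Lemma subord_core (F G : C -> C) :
  (forall z, inD z -> ex_derive (K:=C_AbsRing) (V:=C_NormedModule) G z) ->
  G (RtoC 0) = RtoC 1 ->
  (forall z, inD z -> region (2 * G z - 1)%C) ->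
  (forall z, inD z -> F z = G z) -> subord F phi_car.
Proof.
  intros HG HG0 Hreg HFG.
  exists (fun z => csqrt (2 * G z - 1) - 1)%C. split; [|split; [|split]].
  - intros z Hz. destruct (HG z Hz) as [l Hl]. eexists. apply CD_minus. 2: apply CD_const.
    apply (CD_comp csqrt (fun w => 2 * G w - 1)%C). apply csqrt_D. apply region_fst. apply Hreg; auto.
    apply CD_minus. apply CD_scal. exact Hl. apply CD_const.
  - intros z Hz. apply region_inD. apply Hreg; auto.
  - rewrite HG0. replace (2 * RtoC 1 - 1)%C with (RtoC 1). rewrite csqrt_one. ring.
    unfold RtoC, Cmult, Cminus, Cplus, Copp; simpl. f_equal; ring.
  - intros z Hz. rewrite HFG by auto. unfold phi_car.
    pose proof (csqrt_sq _ (region_fst _ (Hreg z Hz))) as Hs.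
    set (s := csqrt (2 * G z - 1)%C) in *.
    replace (1 + (s - 1) + (s - 1) * (s - 1) / 2)%C with ((s * s + 1) / 2)%C.
    rewrite Hs. field; try (intro E; injection E; lra).
    field; try (intro E; injection E; lra).
Qed.

Lemma Cmod_sq_lt (z : C) (r : R) : 0 <= r -> Cmod z < r -> Cmod z * Cmod z < r * r.
Proof. intros. pose proof (Cmod_ge_0 z). nra. Qed.

Lemma region_near1 (z : C) : Cmod (z - 1) < 1 -> region z.
Proof.
  intros H. apply Cmod_sq_lt in H; [|lra]. rewrite Cmod_sqr in H. unfold region. rewrite Cmod_sqr.
  destruct z as [p q]. simpl in *. nra.
Qed.

Lemma region_ratio (z : C) : 3 * Cmod (z - 1) < Cmod (z + 3) -> region z.
Proof.
  intros H. pose proof (Cmod_ge_0 (z - 1)%C).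
  assert (9 * (Cmod (z - 1) * Cmod (z - 1)) < Cmod (z + 3) * Cmod (z + 3)) by nra.
  rewrite !Cmod_sqr in H1. unfold region. rewrite Cmod_sqr. destruct z as [p q]. simpl in *. nra.
Qed.

Lemma jan_D A B (w0 : C -> C) z : ex_derive (K:=C_AbsRing) (V:=C_NormedModule) w0 z ->
  (1 + RtoC B * w0 z)%C <> RtoC 0 ->
  ex_derive (K:=C_AbsRing) (V:=C_NormedModule) (fun x => janowski A B (w0 x)) z.
Proof.
  intros [l Hl] Hd. eexists. unfold janowski. apply CD_div; auto.
  apply CD_plus. apply CD_const. apply CD_scal. exact Hl.
  apply CD_plus. apply CD_const. apply CD_scal. exact Hl.
Qed.

Lemma jan_0 A B : janowski A B (RtoC 0) = RtoC 1.
Proof. unfold janowski. replace (1 + RtoC A * RtoC 0)%C with (RtoC 1) by ring.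
  replace (1 + RtoC B * RtoC 0)%C with (RtoC 1) by ring. field; try (intro E; injection E; lra). Qed.

Lemma denom_nz (b : R) (u : C) : Rabs b <= 1 -> Cmod u < 1 -> 0 < Cmod (1 + RtoC b * u)%C.
Proof.
  intros Hb Hu. pose proof (Cmod_rev2 (RtoC 1) (RtoC b * u)). rewrite Cmod_1, Cmod_mult, Cmod_R in H.
  pose proof (Cmod_ge_0 u). pose proof (Rabs_pos b).
  assert (Rabs b * Cmod u < 1) by nra. lra.
Qed.

Lemma part1 : forall alpha : R, 1/2 <= alpha < 1 ->
  forall f : C -> C, S_star_AB (1 - alpha) 0 f -> S_star_car f.
Proof.
  intros alpha Ha f [HA [w0 [Hw0 [Hw0D [Hw00 Hw0e]]]]]. split; auto.
  apply (subord_core _ (fun z => janowski (1 - alpha) 0 (w0 z))).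
  - intros z Hz. apply jan_D. apply Hw0; auto. apply Cmod_pos_neq, denom_nz. rewrite Rabs_R0; lra. apply Hw0D; auto.
  - simpl. rewrite Hw00. apply jan_0.
  - intros z Hz. apply region_near1. specialize (Hw0D z Hz). unfold inD in Hw0D.
    pose proof (denom_nz 0 (w0 z) ltac:(rewrite Rabs_R0; lra) Hw0D) as Hd.
    replace (2 * janowski (1 - alpha) 0 (w0 z) - 1 - 1)%C with (2 * RtoC (1 - alpha) * w0 z)%C.
    rewrite !Cmod_mult, !Cmod_R, !Rabs_right by lra. pose proof (Cmod_ge_0 (w0 z)). nra.
    unfold janowski. field; try (apply Cmod_pos_neq; auto).
  - exact Hw0e.
Qed.

Lemma part2 : forall alpha : R, 0 < alpha <= 1/3 ->
  forall f : C -> C, S_star_AB alpha (- alpha) f -> S_star_car f.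
Proof.
  intros alpha Ha f [HA [w0 [Hw0 [Hw0D [Hw00 Hw0e]]]]]. split; auto.
  assert (Hab : Rabs (- alpha) <= 1) by (rewrite Rabs_Ropp, Rabs_right; lra).
  apply (subord_core _ (fun z => janowski alpha (- alpha) (w0 z))).
  - intros z Hz. apply jan_D. apply Hw0; auto. apply Cmod_pos_neq, denom_nz; auto. apply Hw0D; auto.
  - simpl. rewrite Hw00. apply jan_0.
  - intros z Hz. apply region_ratio. specialize (Hw0D z Hz). unfold inD in Hw0D.
    pose proof (denom_nz (- alpha) (w0 z) Hab Hw0D) as Hd.
    assert (Hdn := Cmod_pos_neq _ Hd).
    assert (Eo : RtoC (- alpha) = (- RtoC alpha)%C) by (unfold RtoC, Copp; simpl; f_equal; ring).
    rewrite Eo in Hdn. unfold janowski. rewrite Eo.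
    replace (2 * ((1 + RtoC alpha * w0 z) / (1 + - RtoC alpha * w0 z)) - 1 - 1)%C with (4 * RtoC alpha * w0 z / (1 + - RtoC alpha * w0 z))%C
      by (field; auto).
    replace (2 * ((1 + RtoC alpha * w0 z) / (1 + - RtoC alpha * w0 z)) - 1 + 3)%C with (4 / (1 + - RtoC alpha * w0 z))%C
      by (field; auto).
    rewrite Eo in Hd.
    rewrite !Cmod_div by auto. rewrite !Cmod_mult, !Cmod_R, !Rabs_right by lra.
    unfold Rdiv. pose proof (Rinv_0_lt_compat _ Hd). pose proof (Cmod_ge_0 (w0 z)).
    assert (3 * (4 * alpha * Cmod (w0 z)) < 4) by nra. nra.
  - exact Hw0e.
Qed.

Lemma Cdiv_0 (a : C) : (a / RtoC 0)%C = RtoC 0.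
Proof. unfold Cdiv. rewrite Cinv_0. ring. Qed.

Lemma zfpf_zero f z : z <> RtoC 0 -> f z = RtoC 0 -> zfpf f z = RtoC 0.
Proof. intros Hz Hf. unfold zfpf. destruct (Ceq_dec z 0); [contradiction|]. rewrite Hf. apply Cdiv_0. Qed.

Lemma ccont_line_pt (F : C -> C) (z1 : C) t : ccont F (RtoC t * z1)%C ->
  continuity_pt (fun s => - fst (F (RtoC s * z1)%C)) t.
Proof.
  intros H eps He. destruct (H eps He) as [d [Hd H']].
  exists (d / (Cmod z1 + 1)). split. apply Rdiv_lt_0_compat; auto. pose proof (Cmod_ge_0 z1); lra.
  intros s [_ Hs]. simpl in *. unfold R_dist in *.
  assert (Hc : Cmod (RtoC s * z1 - RtoC t * z1)%C < d).
  { replace (RtoC s * z1 - RtoC t * z1)%C with (RtoC (s - t) * z1)%C by (unfold RtoC, Cmult, Cminus, Cplus, Copp; simpl; f_equal; ring).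
    rewrite Cmod_mult, Cmod_R. pose proof (Cmod_ge_0 z1). pose proof (Rabs_pos (s - t)).
    assert (Rabs (s - t) * (Cmod z1 + 1) < d).
    { apply (Rmult_lt_reg_r (/ (Cmod z1 + 1))). apply Rinv_0_lt_compat; lra.
      rewrite Rmult_assoc, Rinv_r by lra. unfold Rdiv in Hs. lra. }
    nra. }
  specialize (H' _ Hc). pose proof (Cmod_fst (F (RtoC s * z1)%C - F (RtoC t * z1)%C)%C). simpl in H0.
  replace (- fst (F (RtoC s * z1)%C) - - fst (F (RtoC t * z1)%C)) with (- (fst (F (RtoC s * z1)%C) + - fst (F (RtoC t * z1)%C))) by ring.
  rewrite Rabs_Ropp. lra.
Qed.

Lemma part3 : forall f : C -> C, classA f ->
     ((forall z : C, inD z -> Cmod (zfpf f z - 1)%C < 1/2) \/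
      (forall z : C, inD z -> Cmod ((zfpf f z - 1) / (zfpf f z + 1))%C < 1/3)) ->
     S_star_car f.
Proof.
  intros f HA Hcase. split; auto.
  assert (Hnz : forall z, inD z -> z <> RtoC 0 -> f z <> RtoC 0).
  { intros z Hz Hz0 E. pose proof (zfpf_zero f z Hz0 E) as E'.
    destruct Hcase as [H|H]; specialize (H z Hz); rewrite E' in H.
    - replace (RtoC 0 - 1)%C with (- RtoC 1)%C in H by ring. rewrite Cmod_opp, Cmod_1 in H. lra.
    - replace ((RtoC 0 - 1) / (RtoC 0 + 1))%C with (- RtoC 1)%C in H by (field; intro X; injection X; lra).
      rewrite Cmod_opp, Cmod_1 in H. lra. }
  pose proof (zfpf_analytic f HA Hnz) as HF.
  assert (HF0 : zfpf f (RtoC 0) = RtoC 1) by (unfold zfpf; destruct (Ceq_dec (RtoC 0) 0); congruence).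
  apply (subord_core _ (zfpf f)); auto.
  intros z Hz. destruct Hcase as [H|H].
  - apply region_near1. specialize (H z Hz).
    replace (2 * zfpf f z - 1 - 1)%C with (RtoC 2 * (zfpf f z - 1))%C by ring.
    rewrite Cmod_mult, Cmod_R, Rabs_right by lra. lra.
  - apply region_ratio.
    assert (Hm1 : forall u, inD u -> zfpf f u <> (- RtoC 1)%C).
    { intros z1 Hz1 E1.
      assert (Hcont : forall t, 0 <= t <= 1 -> continuity_pt (fun s => - fst (zfpf f (RtoC s * z1)%C)) t).
      { intros t Ht. apply ccont_line_pt. apply ex_CD_cont. apply HF. unfold inD in *.
        rewrite Cmod_mult, Cmod_R. pose proof (Cmod_ge_0 z1). rewrite Rabs_right by lra. nra. }
      destruct (Ranalysis5.IVT_interv (fun s => - fst (zfpf f (RtoC s * z1)%C)) 0 1 Hcont Rlt_0_1) as [t [Ht Ht0]].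
      + replace (RtoC 0 * z1)%C with (RtoC 0) by ring. rewrite HF0. simpl. lra.
      + replace (RtoC 1 * z1)%C with z1 by ring. rewrite E1. simpl. lra.
      + set (u := (RtoC t * z1)%C) in *.
        assert (Hu : inD u). { unfold inD, u in *. rewrite Cmod_mult, Cmod_R. pose proof (Cmod_ge_0 z1). rewrite Rabs_right by lra. nra. }
        specialize (H u Hu). set (F := zfpf f u) in *.
        destruct F as [p q] eqn:EF. simpl in Ht0. assert (p = 0) by lra. subst p.
        destruct (Ceq_dec ((0, q) + 1)%C (RtoC 0)) as [E0|E0].
        * injection E0. intros. lra.
        * rewrite Cmod_div in H by auto.
          assert (Cmod ((0, q) - 1)%C = Cmod ((0, q) + 1)%C).
          { unfold Cmod. f_equal. simpl. ring. }
          rewrite H0 in H. pose proof (Cneq_Cmod _ E0).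
          unfold Rdiv in H. rewrite Rinv_r in H by lra. lra. }
    specialize (H z Hz). specialize (Hm1 z Hz).
    assert (E0 : (zfpf f z + 1)%C <> RtoC 0).
    { intro E. apply Hm1. replace (zfpf f z) with ((zfpf f z + 1) - 1)%C by ring. rewrite E. ring. }
    rewrite Cmod_div in H by auto. pose proof (Cneq_Cmod _ E0).
    replace (2 * zfpf f z - 1 - 1)%C with (RtoC 2 * (zfpf f z - 1))%C by ring.
    replace (2 * zfpf f z - 1 + 3)%C with (RtoC 2 * (zfpf f z + 1))%C by ring.
    rewrite !Cmod_mult, Cmod_R, Rabs_right by lra.
    assert (Cmod (zfpf f z - 1) < Cmod (zfpf f z + 1) / 3).
    { apply (Rmult_lt_reg_r (/ Cmod (zfpf f z + 1))). apply Rinv_0_lt_compat; lra.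
      replace (Cmod (zfpf f z + 1) / 3 * / Cmod (zfpf f z + 1)) with (1/3) by (field; lra). exact H. }
    lra.
Qed.

Theorem corollary3p2 :
  (forall alpha : R, 1/2 <= alpha < 1 ->
     forall f : C -> C, S_star_AB (1 - alpha) 0 f -> S_star_car f) /\
  (forall alpha : R, 0 < alpha <= 1/3 ->
     forall f : C -> C, S_star_AB alpha (- alpha) f -> S_star_car f) /\
  (forall f : C -> C, classA f ->
     ((forall z : C, inD z -> Cmod (zfpf f z - 1)%C < 1/2) \/
      (forall z : C, inD z ->
         Cmod ((zfpf f z - 1) / (zfpf f z + 1))%C < 1/3)) ->
     S_star_car f).
Proof.
  split. exact part1. split. exact part2. exact part3.
Qed.
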